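(* Let $\ell\in\mathbb{Z}_{\ge2}$, let $b_{n,m}=b_{n,m}(\ell)$ be as in the context, and let $b_n=\sum_{m\ge0}b_{n,m}$. Put $a_n^a=\sqrt{2/\pi}\cdot n^{-1/2}\cdot 2^n$ and $$b_n^a=\begin{cases}\tfrac{\ell+1}{2\ell}\cdot a_n^a & \ell\text{ odd},\\ \tfrac{\ell+1+(-1)^{n+1}}{2\ell}\cdot a_n^a & \ell\text{ even}.\end{cases}$$ Then $b_n\sim b_n^a$ as $n\to\infty$, and $|b_n-b_n^a|/(n^{-1/2}\cdot 2^n)\in O(1/n)$.
   Context: For $n,m\in\mathbb{Z}_{\ge 0}$, $a_{n,m}$ is the number of unit step paths $(x_0,\dots,x_n)$ on $\mathbb{Z}_{\ge0}$ (integers $x_i\ge0$, $|x_i-x_{i-1}|=1$) with $x_0=0$, $x_n=m$. For fixed $\ell\in\mathbb{Z}_{\ge2}$, $b_{n,m}=b_{n,m}(\ell)$ is defined by: $b_{n,m}=a_{n,m}$ if $m\equiv-1\pmod\ell$; $b_{n,m}=b_{n-1,m-1}+b_{n-1,m+1}$ if $m\equiv m_0\pmod\ell$ with $0\le m_0<\ell-2$; $b_{n,m}=b_{n-1,m-1}$ if $m\equiv-2\pmod\ell$; the recursion is used for $n\ge1$ with $b_{0,0}=1$, $b_{0,m}=0$ for $m>0$, and $b_{n,-1}=0$. $\sim$ denotes asymptotic equality. *)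

(* Defs.v *)
From Stdlib Require Import Reals Arith List.
Open Scope R_scope.

(* a n m = number of unit step paths on Z>=0 of length n from 0 to m. *)
Fixpoint apath (n m : nat) : nat :=
  match n with
  | O => if Nat.eqb m 0 then 1%nat else 0%nat
  | S n' => ((match m with O => 0%nat | S m' => apath n' m' end)
             + apath n' (S m))%nat
  end.

(* b n m = b_{n,m}(l); the term b_{n-1,m-1} is 0 when m = 0 (b_{n,-1} = 0). *)
Fixpoint bpath (l n m : nat) : nat :=
  match n with
  | O => if Nat.eqb m 0 then 1%nat else 0%nat
  | S n' =>
      let left := match m with O => 0%nat | S m' => bpath l n' m' end in
      if Nat.eqb (m mod l) (l - 1) then apath n m
      else if Nat.eqb (m mod l) (l - 2) then left
      else (left + bpath l n' (S m))%nat
  end.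

(* b_n = sum_{m >= 0} b_{n,m}; only m <= n can contribute (a path of length n
   cannot reach beyond n), so the sum is taken over 0 <= m <= n. *)
Definition bsum (l n : nat) : nat :=
  fold_right Nat.add 0%nat (map (bpath l n) (seq 0 (S n))).

Definition a_asym (n : nat) : R := sqrt (2 / PI) * / sqrt (INR n) * 2 ^ n.

Definition b_asym (l n : nat) : R :=
  if Nat.even l
  then (INR l + 1 + (-1) ^ (S n)) / (2 * INR l) * a_asym n
  else (INR l + 1) / (2 * INR l) * a_asym n.

(* Main.v *)
Require Import Defs.
From Stdlib Require Import Reals Arith List Lia Lra.
Open Scope R_scope.

Lemma apath_gt : forall n m, (n < m)%nat -> apath n m = 0%nat.
Proof.
  induction n as [|n IH]; intros m H; simpl.
  - destruct m; [lia|reflexivity].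
  - destruct m as [|m]; [lia|]. rewrite !IH by lia. reflexivity.
Qed.

Lemma bpath_gt : forall l n m, (n < m)%nat -> bpath l n m = 0%nat.
Proof.
  intros l; induction n as [|n IH]; intros m H; simpl.
  - destruct m; [lia|reflexivity].
  - destruct m as [|m]; [lia|].
    rewrite (apath_gt n m) by lia. rewrite (apath_gt n (S (S m))) by lia.
    rewrite !IH by lia.
    destruct (Nat.eqb _ _); [reflexivity|]. destruct (Nat.eqb _ _); reflexivity.
Qed.

Lemma bpath_m1 : forall l n m, (m mod l = l - 1)%nat -> bpath l n m = apath n m.
Proof.
  intros l n m H. destruct n; simpl.
  - reflexivity.
  - rewrite H, Nat.eqb_refl. reflexivity.
Qed.

Definition aleft n m := match m with O => 0%nat | S m' => apath n m' end.
Definition bleft l n m := match m with O => 0%nat | S m' => bpath l n m' end.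

Lemma apath_S : forall n m, apath (S n) m = (aleft n m + apath n (S m))%nat.
Proof. reflexivity. Qed.

Lemma bS_m2 : forall l n m, (2 <= l)%nat -> (m mod l = l - 2)%nat ->
  bpath l (S n) m = bleft l n m.
Proof.
  intros l n m Hl H. simpl. rewrite H.
  replace (Nat.eqb (l-2) (l-1)) with false by (symmetry; apply Nat.eqb_neq; lia).
  rewrite Nat.eqb_refl. reflexivity.
Qed.

Lemma bS_oth : forall l n m, (m mod l <> l - 1)%nat -> (m mod l <> l - 2)%nat ->
  bpath l (S n) m = (bleft l n m + bpath l n (S m))%nat.
Proof.
  intros l n m H1 H2. simpl.
  replace (Nat.eqb (m mod l) (l-1)) with false by (symmetry; apply Nat.eqb_neq; lia).
  replace (Nat.eqb (m mod l) (l-2)) with false by (symmetry; apply Nat.eqb_neq; lia).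
  reflexivity.
Qed.

Lemma modjl : forall l j r, (r < l)%nat -> ((j * l + r) mod l = r)%nat.
Proof.
  intros l j r H. rewrite Nat.add_comm, Nat.Div0.mod_add. apply Nat.mod_small; auto.
Qed.

Lemma pairing : forall l, (2 <= l)%nat -> forall n j r s, (r + s + 2 = l)%nat ->
  (bpath l n (S j * l + r) + bpath l n (j * l + s))%nat = apath n (j * l + s).
Proof.
  intros l Hl n. induction n as [|n IH]; intros j r s Hrs.
  - rewrite (bpath_gt l 0 (S j * l + r)) by (simpl; lia). reflexivity.
  - assert (HM : ((S j * l + r) mod l = r)%nat) by (apply modjl; lia).
    assert (HM' : ((j * l + s) mod l = s)%nat) by (apply modjl; lia).
    rewrite apath_S.
    assert (LM : bleft l n (S j * l + r) =
       (if Nat.eqb r 0 then apath n (j*l + (l-1)) else bpath l n (S j * l + (r-1)))%nat).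
    { destruct r as [|r].
      - simpl Nat.eqb. replace (S j * l + 0)%nat with (S (j*l + (l-1))) by (simpl; lia).
        simpl. apply bpath_m1. apply modjl; lia.
      - simpl Nat.eqb. replace (S j * l + S r)%nat with (S (S j * l + r)) by lia.
        simpl. f_equal; lia. }
    assert (LM' : bleft l n (j * l + s) =
       (if Nat.eqb s 0 then aleft n (j*l) else bpath l n (j * l + (s-1)))%nat).
    { destruct s as [|s].
      - simpl Nat.eqb. rewrite Nat.add_0_r. destruct j as [|j]; [reflexivity|].
        replace (S j * l)%nat with (S (j*l + (l-1))) by (simpl; lia).
        simpl. apply bpath_m1. apply modjl; lia.
      - simpl Nat.eqb. replace (j * l + S s)%nat with (S (j * l + s)) by lia.
        simpl. f_equal; lia. }
    assert (AL : aleft n (j * l + s) =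
       (if Nat.eqb s 0 then aleft n (j*l) else apath n (j * l + (s-1)))%nat).
    { destruct s as [|s].
      - simpl Nat.eqb. rewrite Nat.add_0_r. reflexivity.
      - simpl Nat.eqb. replace (j * l + S s)%nat with (S (j * l + s)) by lia.
        simpl. f_equal; lia. }
    rewrite AL.
    destruct (Nat.eq_dec r 0) as [Hr0|Hr0].
    + subst r. simpl Nat.eqb in *.
      destruct (Nat.eq_dec l 2) as [Hl2|Hl2].
      * assert (s = 0%nat) by lia. subst s. simpl Nat.eqb in *.
        rewrite (bS_m2 l n (S j * l + 0)) by (try rewrite HM; lia).
        rewrite (bS_m2 l n (j * l + 0)) by (try rewrite HM'; lia).
        rewrite LM, LM'. simpl Nat.eqb.
        replace (S (j * l + 0)) with (j * l + (l - 1))%nat by lia. lia.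
      * rewrite (bS_oth l n (S j * l + 0)) by (rewrite HM; lia).
        rewrite (bS_m2 l n (j * l + s)) by (try rewrite HM'; lia).
        rewrite LM, LM'. simpl Nat.eqb.
        replace (Nat.eqb s 0) with false by (symmetry; apply Nat.eqb_neq; lia).
        specialize (IH j 1%nat (s-1)%nat ltac:(lia)).
        replace (S (S j * l + 0)) with (S j * l + 1)%nat by lia.
        replace (S (j * l + s)) with (j * l + (l - 1))%nat by lia.
        lia.
    + destruct (Nat.eq_dec r (l-2)) as [Hr2|Hr2].
      *
        assert (s = 0%nat) by lia. subst s.
        rewrite (bS_m2 l n (S j * l + r)) by (try rewrite HM; lia).
        rewrite (bS_oth l n (j * l + 0)) by (rewrite HM'; lia).
        rewrite LM, LM'. simpl Nat.eqb.
        replace (Nat.eqb r 0) with false by (symmetry; apply Nat.eqb_neq; lia).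
        specialize (IH j (r-1)%nat 1%nat ltac:(lia)).
        replace (S (j * l + 0)) with (j * l + 1)%nat by lia.
        rewrite Nat.add_0_r in *. lia.
      * rewrite (bS_oth l n (S j * l + r)) by (rewrite HM; lia).
        rewrite (bS_oth l n (j * l + s)) by (rewrite HM'; lia).
        rewrite LM, LM'.
        replace (Nat.eqb r 0) with false by (symmetry; apply Nat.eqb_neq; lia).
        replace (Nat.eqb s 0) with false by (symmetry; apply Nat.eqb_neq; lia).
        pose proof (IH j (r-1)%nat (s+1)%nat ltac:(lia)) as I1.
        pose proof (IH j (r+1)%nat (s-1)%nat ltac:(lia)) as I2.
        replace (S (S j * l + r)) with (S j * l + (r+1))%nat by lia.
        replace (S (j * l + s)) with (j * l + (s+1))%nat by lia.
        lia.
Qed.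

Fixpoint nsum (f : nat -> nat) (k : nat) : nat :=
  match k with O => 0%nat | S k => (nsum f k + f k)%nat end.

Lemma nsum_ext : forall f g k, (forall i, (i < k)%nat -> f i = g i) -> nsum f k = nsum g k.
Proof. intros f g k H; induction k; simpl; auto. rewrite IHk, H; auto. Qed.

Lemma nsum_shift : forall f k, nsum f (S k) = (f 0 + nsum (fun i => f (S i)) k)%nat.
Proof. intros f k; induction k; simpl in *; lia. Qed.

Lemma fold_seq : forall f k s,
  fold_right Nat.add 0%nat (map f (seq s k)) = nsum (fun i => f (s + i)%nat) k.
Proof.
  intros f k; induction k; intros s; [reflexivity|].
  cbn [seq map fold_right]. rewrite IHk. rewrite (nsum_shift (fun i => f (s + i)%nat)). rewrite Nat.add_0_r.
  f_equal. apply nsum_ext. intros. f_equal; lia.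
Qed.

Lemma bsum_nsum : forall l n, bsum l n = nsum (bpath l n) (S n).
Proof. intros. unfold bsum. rewrite fold_seq. apply nsum_ext. intros; reflexivity. Qed.

Lemma nsum_add : forall f a b, nsum f (a + b) = (nsum f a + nsum (fun i => f (a + i)%nat) b)%nat.
Proof. intros f a b; induction b; [simpl; rewrite Nat.add_0_r; lia|]. rewrite Nat.add_succ_r.
  change (nsum f (S (a + b))) with (nsum f (a + b) + f (a + b))%nat.
  change (nsum (fun i => f (a + i)%nat) (S b)) with (nsum (fun i => f (a + i)%nat) b + f (a + b))%nat.
  lia. Qed.

Lemma nsum_plus : forall f g k, nsum (fun i => f i + g i)%nat k = (nsum f k + nsum g k)%nat.
Proof. intros f g k; induction k; simpl; lia. Qed.

Lemma nsum_zero : forall f k, (forall i, (i < k)%nat -> f i = 0%nat) -> nsum f k = 0%nat.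
Proof. intros f k H; induction k; simpl; auto. rewrite IHk, H; auto. Qed.

Lemma nsum_tail : forall f k K, (forall i, (k <= i)%nat -> f i = 0%nat) -> (k <= K)%nat ->
  nsum f K = nsum f k.
Proof.
  intros f k K H HK. replace K with (k + (K - k))%nat by lia.
  rewrite nsum_add. rewrite (nsum_zero _ (K-k)); [lia|]. intros; apply H; lia.
Qed.

Lemma nsum_blocks : forall f l J,
  nsum f (J * l) = nsum (fun j => nsum (fun r => f (j * l + r)%nat) l) J.
Proof.
  intros f l J; induction J; simpl; auto.
  replace (l + J * l)%nat with (J * l + l)%nat by lia.
  rewrite nsum_add, IHJ. reflexivity.
Qed.

Lemma nsum_rev : forall f k, nsum f k = nsum (fun i => f (k - 1 - i)%nat) k.
Proof.
  intros f k; induction k; [reflexivity|].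
  change (nsum f (S k)) with (nsum f k + f k)%nat.
  rewrite IHk. rewrite (nsum_shift (fun i => f (S k - 1 - i)%nat)).
  replace (S k - 1 - 0)%nat with k by lia.
  rewrite Nat.add_comm. f_equal. apply nsum_ext. intros. f_equal. lia.
Qed.

Lemma nsum_lastl : forall f l, (1 <= l)%nat -> nsum f l = (nsum f (l-1) + f (l-1))%nat.
Proof. intros f l H. destruct l; [lia|]. simpl. replace (l-0)%nat with l by lia. reflexivity. Qed.

Lemma double_tel : forall (beta alpha : nat -> nat),
  (forall j, beta j + beta (S j) = alpha j)%nat ->
  forall J, (2 * nsum beta (S J) = beta 0 + nsum alpha J + beta J)%nat.
Proof.
  intros beta alpha H J; induction J.
  - simpl. lia.
  - change (nsum beta (S (S J))) with (nsum beta (S J) + beta (S J))%nat.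
    simpl (nsum alpha (S J)). specialize (H J). lia.
Qed.

Definition esum l n := nsum (fun m => if Nat.eqb (m mod l) (l-1) then apath n m else 0%nat) (S n).
Definition asum n := nsum (apath n) (S n).
Definition ksum l n := nsum (bpath l n) (l - 1).

Theorem main_identity : forall l n, (2 <= l)%nat ->
  (2 * bsum l n = asum n + esum l n + ksum l n)%nat.
Proof.
  intros l n Hl.
  set (J := S n).
  set (beta := fun j => nsum (fun r => bpath l n (j * l + r)%nat) (l-1)).
  set (alpha := fun j => nsum (fun r => apath n (j * l + r)%nat) (l-1)).
  set (h := fun j => apath n (j * l + (l-1))%nat).
  assert (Hba : forall j, (beta j + beta (S j) = alpha j)%nat).
  { intros j. unfold beta, alpha.
    rewrite (nsum_rev (fun r => bpath l n (S j * l + r)%nat)).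
    rewrite Nat.add_comm, <- nsum_plus. apply nsum_ext. intros s Hs.
    replace (l - 1 - 1 - s)%nat with (l - 2 - s)%nat by lia.
    apply pairing; lia. }
  assert (Hbig : (S n <= S J * l)%nat) by (unfold J; simpl; nia).
  assert (EB : bsum l n = (nsum beta (S J) + nsum h (S J))%nat).
  { rewrite bsum_nsum. rewrite <- (nsum_tail (bpath l n) (S n) (S J * l)).
    2: { intros; apply bpath_gt; lia. } 2: lia.
    rewrite nsum_blocks, <- nsum_plus. apply nsum_ext. intros j _.
    rewrite nsum_lastl by lia. unfold beta, h. f_equal. f_equal. apply bpath_m1. apply modjl; lia. }
  assert (EA : asum n = (nsum alpha (S J) + nsum h (S J))%nat).
  { unfold asum. rewrite <- (nsum_tail (apath n) (S n) (S J * l)).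
    2: { intros; apply apath_gt; lia. } 2: lia.
    rewrite nsum_blocks, <- nsum_plus. apply nsum_ext. intros j _.
    rewrite nsum_lastl by lia. reflexivity. }
  assert (EE : esum l n = nsum h (S J)).
  { unfold esum. rewrite <- (nsum_tail _ (S n) (S J * l)).
    2: { intros. destruct (Nat.eqb _ _); auto. apply apath_gt; lia. } 2: lia.
    rewrite nsum_blocks. apply nsum_ext. intros j _.
    rewrite nsum_lastl by lia. rewrite modjl by lia. rewrite Nat.eqb_refl.
    rewrite nsum_zero. 2: { intros i Hi. rewrite modjl by lia.
      replace (Nat.eqb i (l-1)) with false by (symmetry; apply Nat.eqb_neq; lia). reflexivity. }
    reflexivity. }
  assert (EK : ksum l n = beta 0%nat).
  { unfold ksum, beta. apply nsum_ext. intros; reflexivity. }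
  assert (B0 : beta J = 0%nat).
  { unfold beta. apply nsum_zero. intros. apply bpath_gt. unfold J; simpl; nia. }
  assert (A0 : alpha J = 0%nat).
  { unfold alpha. apply nsum_zero. intros. apply apath_gt. unfold J; simpl; nia. }
  pose proof (double_tel beta alpha Hba J) as D.
  rewrite EB, EA, EE, EK. change (nsum alpha (S J)) with (nsum alpha J + alpha J)%nat. clearbody beta alpha h J. lia.
Qed.

Fixpoint binom (n k : nat) : nat :=
  match n, k with
  | _, O => 1%nat
  | O, S _ => 0%nat
  | S n', S k' => (binom n' k' + binom n' (S k'))%nat
  end.

Definition binom' n k := match k with O => 0%nat | S k' => binom n k' end.

Lemma pascal : forall n k, binom (S n) k = (binom n k + binom' n k)%nat.
Proof. intros [|n] [|k]; simpl; lia. Qed.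

Lemma binom_gt : forall n k, (n < k)%nat -> binom n k = 0%nat.
Proof.
  induction n; intros [|k] H; simpl; try lia.
  rewrite !IHn by lia. reflexivity.
Qed.

Lemma binom_nn : forall n, binom n n = 1%nat.
Proof. induction n; simpl; auto. rewrite IHn, binom_gt by lia. lia. Qed.

Lemma binom_sym : forall N a b, (a + b = N)%nat -> binom N a = binom N b.
Proof.
  induction N; intros a b H.
  - assert (a = 0%nat) by lia; assert (b = 0%nat) by lia; subst; reflexivity.
  - destruct a as [|a]; destruct b as [|b].
    + lia.
    + assert (b = N) by lia; subst. rewrite binom_nn. reflexivity.
    + assert (a = N) by lia; subst. rewrite binom_nn. reflexivity.
    + simpl. rewrite (IHN a (S b)) by lia. rewrite (IHN (S a) b) by lia. lia.
Qed.

Lemma ballot : forall n m i, n = (m + 2 * i)%nat -> (apath n m + binom' n i = binom n i)%nat.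
Proof.
  induction n as [|n IH]; intros m i H.
  - assert (m = 0%nat) by lia; assert (i = 0%nat) by lia; subst. reflexivity.
  - rewrite apath_S. destruct i as [|i].
    + assert (m = S n) by lia. subst m. simpl aleft.
      pose proof (IH n 0%nat ltac:(lia)) as I. simpl binom' in *. simpl binom.
      rewrite (apath_gt n (S (S n))) by lia. destruct n; simpl in *; lia.
    + destruct m as [|m].
      * simpl aleft. change (binom' (S n) (S i)) with (binom (S n) i).
        pose proof (IH 1%nat i ltac:(lia)) as I.
        change (binom (S n) (S i)) with (binom n i + binom n (S i))%nat.
        rewrite (pascal n i).
        assert (binom n i = binom n (S i)) by (apply binom_sym; lia).
        lia.
      * simpl aleft.
        pose proof (IH m (S i) ltac:(lia)) as I1.
        pose proof (IH (S (S m)) i ltac:(lia)) as I2.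
        change (binom' (S n) (S i)) with (binom (S n) i).
        change (binom' n (S i)) with (binom n i) in I1.
        rewrite (pascal n i).
        change (binom (S n) (S i)) with (binom n i + binom n (S i))%nat.
        lia.
Qed.

Lemma apath_parity : forall n m k, (n + m = 2 * k + 1)%nat -> apath n m = 0%nat.
Proof.
  induction n as [|n IH]; intros m k H.
  - simpl. destruct m; [lia|reflexivity].
  - rewrite apath_S. destruct m as [|m]; simpl aleft.
    + rewrite (IH 1%nat k) by lia. reflexivity.
    + destruct k; [lia|].
      rewrite (IH m k) by lia. rewrite (IH (S (S m)) (S k)) by lia. reflexivity.
Qed.

Lemma asum_rec : forall n, (asum (S n) + apath n 0 = 2 * asum n)%nat.
Proof.
  intros n. unfold asum.
  rewrite (nsum_ext (apath (S n)) (fun m => aleft n m + apath n (S m))%nat) by (intros; apply apath_S).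
  rewrite nsum_plus.
  rewrite (nsum_shift (aleft n)). simpl aleft.
  change (nsum (fun m => apath n (S m)) (S (S n))) with
    (nsum (fun m => apath n (S m)) (S n) + apath n (S (S n)))%nat.
  rewrite (apath_gt n (S (S n))) by lia.
  rewrite (nsum_shift (apath n)).
  change (nsum (fun i => apath n (S i)) (S n)) with
    (nsum (fun i => apath n (S i)) n + apath n (S n))%nat.
  rewrite (apath_gt n (S n)) by lia.
  change (nsum (fun i : nat => aleft n (S i)) (S n)) with (nsum (apath n) (S n)).
  rewrite (nsum_shift (apath n)). lia.
Qed.

Lemma asum_closed : forall k, asum (2 * k) = binom (2 * k) k /\ asum (2 * k + 1) = binom (2 * k + 1) k.
Proof.
  induction k as [|k [IH1 IH2]].
  - split; reflexivity.
  - assert (E1 : asum (2 * S k) = binom (2 * S k) (S k)).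
    { pose proof (asum_rec (2 * k + 1)) as R.
      rewrite (apath_parity (2*k+1) 0 k) in R by lia.
      replace (S (2 * k + 1)) with (2 * S k)%nat in R by lia.
      rewrite IH2 in R.
      replace (2 * S k)%nat with (S (2 * k + 1)) by lia.
      rewrite pascal. change (binom' (2*k+1) (S k)) with (binom (2*k+1) k).
      assert (binom (2*k+1) k = binom (2*k+1) (S k)) by (apply binom_sym; lia).
      replace (S (2 * k + 1)) with (2 * S k)%nat by lia. lia. }
    split; auto.
    pose proof (asum_rec (2 * S k)) as R.
    pose proof (ballot (2 * S k) 0 (S k) ltac:(lia)) as B.
    replace (2 * S k + 1)%nat with (S (2 * S k)) by lia.
    rewrite pascal. lia.
Qed.

Lemma absorb : forall n k, ((S k) * binom (S n) (S k) = (S n) * binom n k)%nat.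
Proof.
  induction n; intros k.
  - destruct k; simpl; lia.
  - change (binom (S (S n)) (S k)) with (binom (S n) k + binom (S n) (S k))%nat.
    destruct k.
    + assert (binom (S n) 1 = S n).
      { clear IHn. induction n; [reflexivity|].
        change (binom (S (S n)) 1) with (binom (S n) 0 + binom (S n) 1)%nat.
        rewrite IHn. reflexivity. }
      rewrite H. change (binom (S n) 0) with 1%nat. lia.
    + pose proof (IHn k) as I1. pose proof (IHn (S k)) as I2.
      change (binom (S n) (S k)) with (binom n k + binom n (S k))%nat in *.
      nia.
Qed.

Lemma central_rec : forall k,
  ((S k) * binom (2 * S k) (S k) = 2 * (2 * k + 1) * binom (2 * k) k)%nat.
Proof.
  intros k.
  pose proof (absorb (2*k+1) k) as A1.
  pose proof (absorb (2*k) k) as A2.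
  assert (binom (2*k+1) k = binom (2*k+1) (S k)) by (apply binom_sym; lia).
  replace (2 * S k)%nat with (S (2 * k + 1)) by lia.
  replace (S (2 * k)) with (2 * k + 1)%nat in A2 by lia.
  nia.
Qed.

Lemma central_odd : forall k,
  ((S k) * binom (2 * k + 1) k = (2 * k + 1) * binom (2 * k) k)%nat.
Proof.
  intros k. pose proof (absorb (2*k) k) as A2.
  assert (binom (2*k+1) k = binom (2*k+1) (S k)) by (apply binom_sym; lia).
  replace (S (2 * k)) with (2 * k + 1)%nat in A2 by lia. nia.
Qed.

Fixpoint rsum (f : nat -> R) (k : nat) : R :=
  match k with O => 0 | S k => rsum f k + f k end.

Lemma rsum_ext : forall f g k, (forall i, (i < k)%nat -> f i = g i) -> rsum f k = rsum g k.
Proof. intros f g k H; induction k; simpl; auto. rewrite IHk, H; auto. Qed.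

Lemma rsum_shift : forall f k, rsum f (S k) = f 0%nat + rsum (fun i => f (S i)) k.
Proof. intros f k; induction k; simpl in *; lra. Qed.

Lemma rsum_plus : forall f g k, rsum (fun i => f i + g i) k = rsum f k + rsum g k.
Proof. intros f g k; induction k; simpl; lra. Qed.

Lemma rsum_minus : forall f g k, rsum (fun i => f i - g i) k = rsum f k - rsum g k.
Proof. intros f g k; induction k; simpl; lra. Qed.

Lemma rsum_scal : forall c f k, rsum (fun i => c * f i) k = c * rsum f k.
Proof. intros c f k; induction k; simpl; lra. Qed.

Lemma rsum_zero : forall f k, (forall i, (i < k)%nat -> f i = 0) -> rsum f k = 0.
Proof. intros f k H; induction k; simpl; auto. rewrite IHk, H; auto; lra. Qed.

Lemma rsum_abs : forall f g k, (forall i, (i < k)%nat -> Rabs (f i) <= g i) -> Rabs (rsum f k) <= rsum g k.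
Proof.
  intros f g k H; induction k; simpl. rewrite Rabs_R0; lra.
  eapply Rle_trans. apply Rabs_triang. apply Rplus_le_compat; auto.
Qed.

Lemma rsum_le : forall f g k, (forall i, (i < k)%nat -> f i <= g i) -> rsum f k <= rsum g k.
Proof. intros f g k H; induction k; simpl. lra. apply Rplus_le_compat; auto. Qed.

Lemma rsum_const : forall c k, rsum (fun _ => c) k = INR k * c.
Proof. intros c k; induction k; simpl rsum. simpl; lra. rewrite S_INR. lra. Qed.

Lemma rsum_swap : forall (f : nat -> nat -> R) a b,
  rsum (fun i => rsum (fun j => f i j) b) a = rsum (fun j => rsum (fun i => f i j) a) b.
Proof.
  intros f a b; induction a; simpl.
  - rewrite rsum_zero; auto.
  - rewrite IHa, <- rsum_plus. reflexivity.
Qed.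

Lemma rsum_nsum : forall f k, rsum (fun i => INR (f i)) k = INR (nsum f k).
Proof. intros f k; induction k; simpl; auto. rewrite plus_INR. lra. Qed.

Lemma rsum_tel : forall t k, rsum (fun i => t (S i) - t i) k = t k - t 0%nat.
Proof. intros t k; induction k; simpl; lra. Qed.

Definition Sg (g : nat -> R) (n : nat) : R := rsum (fun m => INR (apath n m) * g (S m)) (S n).

Lemma Sg_rec : forall g n,
  Sg g (S n) = rsum (fun m => INR (apath n m) * (g m + g (S (S m)))) (S n) - INR (apath n 0) * g 0%nat.
Proof.
  intros g n. unfold Sg.
  rewrite (rsum_ext _ (fun m => INR (aleft n m) * g (S m) + INR (apath n (S m)) * g (S m))).
  2: { intros i _. rewrite apath_S, plus_INR. lra. }
  rewrite rsum_plus.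
  rewrite (rsum_shift (fun m => INR (aleft n m) * g (S m))). simpl aleft.
  change (rsum (fun i => INR (aleft n (S i)) * g (S (S i))) (S n))
    with (rsum (fun i => INR (apath n i) * g (S (S i))) (S n)).
  change (rsum (fun m => INR (apath n (S m)) * g (S m)) (S (S n))) with
    (rsum (fun m => INR (apath n (S m)) * g (S m)) (S n) + INR (apath n (S (S n))) * g (S (S n))).
  rewrite (apath_gt n (S (S n))) by lia.
  assert (H : rsum (fun m => INR (apath n m) * g m) (S n) =
     INR (apath n 0) * g 0%nat + rsum (fun m => INR (apath n (S m)) * g (S m)) (S n)).
  { rewrite rsum_shift. f_equal.
    change (rsum (fun i => INR (apath n (S i)) * g (S i)) (S n)) with
     (rsum (fun i => INR (apath n (S i)) * g (S i)) n + INR (apath n (S n)) * g (S n)).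
    rewrite (apath_gt n (S n)) by lia. simpl INR. lra. }
  rewrite (rsum_ext (fun m => INR (apath n m) * (g m + g (S (S m))))
              (fun m => INR (apath n m) * g m + INR (apath n m) * g (S (S m)))) by (intros; lra).
  rewrite rsum_plus, H. simpl (INR 0). lra.
Qed.

Lemma Sg_eigen : forall g mu, (forall m, g m + g (S (S m)) = mu * g (S m)) ->
  forall n, Sg g (S n) = mu * Sg g n - INR (apath n 0) * g 0%nat.
Proof.
  intros g mu H n. rewrite Sg_rec. unfold Sg. rewrite <- rsum_scal.
  f_equal. apply rsum_ext. intros. rewrite H. ring.
Qed.

Lemma Sg_one : forall n, Sg (fun _ => 1) n = INR (asum n).
Proof. intros n. unfold Sg, asum. rewrite <- rsum_nsum. apply rsum_ext; intros; ring. Qed.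

Lemma asum_rec_R : forall n, INR (asum (S n)) = 2 * INR (asum n) - INR (apath n 0).
Proof. intros n. pose proof (asum_rec n) as H. apply (f_equal INR) in H.
  rewrite plus_INR, mult_INR in H. simpl (INR 2) in H. lra. Qed.

Lemma cos_eigen : forall th a, cos (a - th) + cos (a + th) = 2 * cos th * cos a.
Proof. intros. rewrite cos_minus, cos_plus. ring. Qed.

Lemma sin_eigen : forall th a, sin (a - th) + sin (a + th) = 2 * cos th * sin a.
Proof. intros. rewrite sin_minus, sin_plus. ring. Qed.

Lemma sin_kPI : forall x q, sin (x + INR q * PI) = (-1) ^ q * sin x.
Proof.
  intros x q; induction q. simpl. replace (x + 0 * PI) with x by ring; ring.
  rewrite S_INR. replace (x + (INR q + 1) * PI) with ((x + INR q * PI) + PI) by ring.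
  rewrite neg_sin, IHq. simpl. ring.
Qed.

Lemma pow_m1_neq0 : forall q, (-1) ^ q <> 0.
Proof. intros. apply pow_nonzero. lra. Qed.

Lemma INR_posl : forall l, (1 <= l)%nat -> 0 < INR l.
Proof. intros. apply lt_0_INR. lia. Qed.

Lemma cos_sum : forall l y, (1 <= l)%nat ->
  rsum (fun k => cos (INR k * (2 * PI * INR y / INR l))) l =
  if Nat.eqb (y mod l) 0 then INR l else 0.
Proof.
  intros l y Hl. pose proof (INR_posl l Hl) as Hlp.
  pose proof (Nat.div_mod y l ltac:(lia)) as Hdm.
  set (q := (y / l)%nat) in *. set (r := (y mod l)%nat) in *.
  assert (Hr : (r < l)%nat) by (apply Nat.mod_upper_bound; lia).
  destruct (Nat.eqb_spec r 0) as [H0|H0].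
  - rewrite (rsum_ext _ (fun _ => 1)). rewrite rsum_const; ring.
    intros k _. rewrite H0, Nat.add_0_r in Hdm.
    replace (INR k * (2 * PI * INR y / INR l)) with (0 + 2 * INR (k * q) * PI).
    rewrite cos_period. apply cos_0.
    rewrite Hdm, !mult_INR. field. lra.
  - set (th := 2 * PI * INR y / INR l).
    assert (Hs : sin (th / 2) <> 0).
    { replace (th / 2) with (PI * INR r / INR l + INR q * PI).
      rewrite sin_kPI. apply Rmult_integral_contrapositive. split. apply pow_m1_neq0.
      apply Rgt_not_eq. apply sin_gt_0.
      apply Rdiv_lt_0_compat; [|lra]. apply Rmult_lt_0_compat. apply PI_RGT_0. apply lt_0_INR; lia.
      apply Rmult_lt_reg_r with (INR l); auto. unfold Rdiv. rewrite Rmult_assoc, Rinv_l by lra.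
      rewrite Rmult_1_r. apply Rmult_lt_compat_l. apply PI_RGT_0. apply lt_INR; auto.
      unfold th. rewrite Hdm, plus_INR, mult_INR. field. lra. }
    assert (T : rsum (fun k => sin (INR (S k) * th - th / 2) - sin (INR k * th - th / 2)) l
                = 2 * sin (th / 2) * rsum (fun k => cos (INR k * th)) l).
    { rewrite <- rsum_scal. apply rsum_ext. intros k _. rewrite S_INR.
      replace ((INR k + 1) * th - th / 2) with (INR k * th + th / 2) by field.
      rewrite sin_plus, sin_minus. ring. }
    pose proof (rsum_tel (fun k => sin (INR k * th - th / 2)) l) as TT. cbv beta in TT. rewrite TT in T. simpl INR in T at 2.
    assert (Hl2 : sin (INR l * th - th / 2) = sin (0 * th - th / 2)).
    { replace (INR l * th - th / 2) with (- (th / 2) + 2 * INR y * PI).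
      rewrite sin_period. f_equal. ring. unfold th. field. lra. }
    rewrite Hl2 in T. replace (sin (0 * th - th / 2) - sin (0 * th - th / 2)) with 0 in T by ring.
    symmetry in T. apply Rmult_integral in T. destruct T as [T|T]; [|exact T].
    exfalso. apply Hs. lra.
Qed.

Definition gk (l k y : nat) : R := cos (INR k * (2 * PI * INR y / INR l)).
Definition thk (l k : nat) : R := INR k * (2 * PI / INR l).

Lemma gk_eigen : forall l k, (1 <= l)%nat -> forall m,
  gk l k m + gk l k (S (S m)) = (2 * cos (thk l k)) * gk l k (S m).
Proof.
  intros l k Hl m. pose proof (INR_posl l Hl). unfold gk, thk.
  rewrite <- cos_eigen with (th := INR k * (2 * PI / INR l)).
  f_equal; f_equal; rewrite !S_INR; field; lra.
Qed.

Lemma mod_succ_0 : forall l m, (1 <= l)%nat ->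
  Nat.eqb (S m mod l) 0 = Nat.eqb (m mod l) (l - 1).
Proof.
  intros l m Hl.
  pose proof (Nat.div_mod_eq m l) as E.
  assert (Hr : (m mod l < l)%nat) by (apply Nat.mod_upper_bound; lia).
  set (q := (m / l)%nat) in *. set (r := (m mod l)%nat) in *.
  destruct (Nat.eq_dec r (l-1)).
  - replace (S m) with (S q * l + 0)%nat by (simpl; nia). rewrite modjl by lia.
    rewrite e, !Nat.eqb_refl. reflexivity.
  - replace (S m) with (q * l + S r)%nat by nia. rewrite modjl by lia.
    destruct (Nat.eqb_spec r (l-1)); [lia|]. reflexivity.
Qed.

Lemma esum_R : forall l n, (1 <= l)%nat ->
  INR (esum l n) = / INR l * rsum (fun k => Sg (gk l k) n) l.
Proof.
  intros l n Hl. pose proof (INR_posl l Hl).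
  unfold esum. rewrite <- rsum_nsum. unfold Sg.
  rewrite rsum_swap, <- rsum_scal. apply rsum_ext. intros m _.
  rewrite rsum_scal. unfold gk. rewrite cos_sum by auto. rewrite mod_succ_0 by auto.
  destruct (Nat.eqb _ _). field. lra. simpl. ring.
Qed.

Lemma gk0 : forall l y, gk l 0 y = 1.
Proof. intros. unfold gk. simpl INR. rewrite Rmult_0_l. apply cos_0. Qed.

Lemma cos_nPI : forall y, cos (INR y * PI) = (-1) ^ y.
Proof.
  induction y. simpl. rewrite Rmult_0_l. apply cos_0.
  rewrite S_INR. replace ((INR y + 1) * PI) with (INR y * PI + PI) by ring.
  rewrite neg_cos, IHy. simpl. ring.
Qed.

Lemma gk_half : forall l k y, (1 <= l)%nat -> (2 * k = l)%nat -> gk l k y = (-1) ^ y.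
Proof.
  intros l k y Hl Hk. pose proof (INR_posl l Hl). unfold gk.
  rewrite <- cos_nPI. f_equal. subst l. rewrite mult_INR. simpl (INR 2). field.
  rewrite mult_INR in H. simpl (INR 2) in H. lra.
Qed.

Lemma apath0_sign : forall n, INR (apath n 0) * (-1) ^ n = INR (apath n 0).
Proof.
  intros n. destruct (Nat.Even_or_Odd n) as [[h Hh]|[h Hh]]; subst.
  - rewrite pow_1_even. ring.
  - rewrite (apath_parity _ 0 h) by lia. simpl. ring.
Qed.

Lemma Sg_half : forall l k n, (1 <= l)%nat -> (2 * k = l)%nat ->
  Sg (gk l k) n = (-1) ^ (S n) * INR (asum n).
Proof.
  intros l k n Hl Hk. induction n.
  - unfold Sg. simpl rsum. rewrite gk_half by auto. unfold asum. simpl. ring.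
  - assert (Hmu : cos (thk l k) = -1).
    { unfold thk. pose proof (INR_posl l Hl). replace (INR k * (2 * PI / INR l)) with PI.
      apply cos_PI. subst l. rewrite mult_INR. simpl (INR 2). field.
      rewrite mult_INR in H. simpl (INR 2) in H. lra. }
    rewrite (Sg_eigen _ _ (gk_eigen l k Hl)). rewrite IHn, Hmu, asum_rec_R.
    rewrite gk_half by auto. pose proof (apath0_sign n).
    simpl pow. simpl pow in H. lra.
Qed.

Fixpoint Xs (lam : R) (n : nat) : R :=
  match n with O => 1 | S n => lam * Xs lam n + INR (apath n 0) end.

Lemma Xs_nonneg : forall lam, 0 <= lam -> forall n, 0 <= Xs lam n.
Proof.
  intros lam H n; induction n; simpl. lra.
  pose proof (pos_INR (apath n 0)). nra.
Qed.

Lemma Sg_other : forall l k lam, (1 <= l)%nat -> Rabs (2 * cos (thk l k)) <= lam ->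
  forall n, Rabs (Sg (gk l k) n) <= Xs lam n.
Proof.
  intros l k lam Hl Hlam n. induction n.
  - unfold Sg. simpl rsum. simpl Xs. rewrite Rplus_0_l. simpl (INR 1). rewrite Rmult_1_l.
    unfold gk. apply Rabs_le. apply COS_bound.
  - rewrite (Sg_eigen _ _ (gk_eigen l k Hl)). simpl Xs.
    unfold gk at 2. simpl (INR 0). replace (2 * PI * 0 / INR l) with 0 by (field; pose proof (INR_posl l Hl); lra).
    rewrite Rmult_0_r, cos_0, Rmult_1_r.
    eapply Rle_trans. apply Rabs_triang. rewrite Rabs_Ropp, Rabs_mult.
    rewrite (Rabs_right (INR (apath n 0))) by (apply Rle_ge, pos_INR).
    apply Rplus_le_compat_r. apply Rmult_le_compat; auto using Rabs_pos.
Qed.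

Lemma abs_lt1_of_sin : forall x, sin x <> 0 -> Rabs (cos x) < 1.
Proof.
  intros x Hs. pose proof (sin2_cos2 x) as H. unfold Rsqr in H.
  assert (0 < sin x * sin x) by (destruct (Rlt_or_le 0 (sin x)); [nra|]; assert (sin x < 0) by lra; nra).
  destruct (Rcase_abs (cos x)) as [Hc|Hc].
  - rewrite Rabs_left by auto. nra.
  - rewrite Rabs_right by auto. nra.
Qed.

Lemma cos_thk_lt1 : forall l k, (2 <= l)%nat -> (0 < k < l)%nat -> (2 * k <> l)%nat ->
  Rabs (cos (thk l k)) < 1.
Proof.
  intros l k Hl Hk Hkl. apply abs_lt1_of_sin.
  pose proof (INR_posl l ltac:(lia)) as Hlp. pose proof PI_RGT_0.
  assert (Hk0 : 0 < INR k) by (apply lt_0_INR; lia).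
  assert (Hkl' : INR k < INR l) by (apply lt_INR; lia).
  unfold thk.
  destruct (Nat.lt_ge_cases (2 * k) l) as [H2|H2].
  - apply Rgt_not_eq. apply sin_gt_0.
    + apply Rmult_lt_0_compat; auto. apply Rdiv_lt_0_compat; lra.
    + assert (INR (2 * k) < INR l) by (apply lt_INR; lia). rewrite mult_INR in H0. simpl (INR 2) in H0.
      apply Rmult_lt_reg_r with (INR l); auto.
      replace (INR k * (2 * PI / INR l) * INR l) with (2 * INR k * PI) by (field; lra).
      nra.
  - assert (H3 : (l < 2 * k)%nat) by lia.
    assert (INR l < INR (2 * k)) by (apply lt_INR; lia). rewrite mult_INR in H0. simpl (INR 2) in H0.
    set (y := INR k * (2 * PI / INR l) - PI).
    replace (INR k * (2 * PI / INR l)) with (y + PI) by (unfold y; ring).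
    rewrite neg_sin. apply Ropp_neq_0_compat. apply Rgt_not_eq. apply sin_gt_0.
    + unfold y. apply Rmult_lt_reg_r with (INR l); auto. rewrite Rmult_0_l.
      replace ((INR k * (2 * PI / INR l) - PI) * INR l) with (PI * (2 * INR k - INR l)) by (field; lra).
      nra.
    + unfold y. apply Rmult_lt_reg_r with (INR l); auto.
      replace ((INR k * (2 * PI / INR l) - PI) * INR l) with (PI * (2 * INR k - INR l)) by (field; lra).
      nra.
Qed.

Fixpoint maxf (f : nat -> R) (k : nat) : R :=
  match k with O => 0 | S k => Rmax (maxf f k) (f k) end.

Lemma maxf_ge : forall f k i, (i < k)%nat -> f i <= maxf f k.
Proof.
  intros f k; induction k; intros i Hi; [lia|]. simpl.
  destruct (Nat.eq_dec i k). subst. apply Rmax_r.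
  eapply Rle_trans. apply IHk; lia. apply Rmax_l.
Qed.

Lemma maxf_lt : forall f k c, 0 < c -> (forall i, (i < k)%nat -> f i < c) -> maxf f k < c.
Proof.
  intros f k c Hc H; induction k; simpl; auto. apply Rmax_lub_lt; auto.
Qed.

Lemma maxf_nonneg : forall f k, 0 <= maxf f k.
Proof. intros f k; induction k; simpl. lra. eapply Rle_trans; [exact IHk| apply Rmax_l]. Qed.

Lemma lam_exists : forall l, (2 <= l)%nat -> exists lam, 0 <= lam < 2 /\
  forall k, (k < l)%nat -> k <> 0%nat -> (2 * k <> l)%nat -> Rabs (2 * cos (thk l k)) <= lam.
Proof.
  intros l Hl.
  set (f := fun k => if (Nat.eqb k 0 || Nat.eqb (2 * k) l)%bool then 0 else Rabs (2 * cos (thk l k))).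
  exists (maxf f l). split; [split|].
  - apply maxf_nonneg.
  - apply maxf_lt. lra. intros i Hi. unfold f.
    destruct (Nat.eqb_spec i 0); destruct (Nat.eqb_spec (2*i) l); simpl; try lra.
    rewrite Rabs_mult, Rabs_right by lra.
    pose proof (cos_thk_lt1 l i Hl ltac:(lia) n0). lra.
  - intros k Hk Hk0 Hk2. replace (Rabs (2 * cos (thk l k))) with (f k).
    apply maxf_ge; auto. unfold f.
    destruct (Nat.eqb_spec k 0); destruct (Nat.eqb_spec (2*k) l); simpl; try lia. reflexivity.
Qed.

Definition epsl (l n : nat) : R := if Nat.even l then (-1) ^ (S n) else 0.

Lemma ind_half_sum : forall l c, (1 <= l)%nat -> rsum (fun k => if Nat.eqb (2 * k) l then c else 0) l =
   if Nat.even l then c else 0.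
Proof.
  intros l c Hl1.
  assert (G : forall K, rsum (fun k => if Nat.eqb (2 * k) l then c else 0) K =
      if (Nat.even l && Nat.ltb (Nat.div2 l) K)%bool then c else 0).
  { induction K. simpl. destruct (Nat.even l); reflexivity.
    match goal with |- rsum ?f (S ?K) = _ => change (rsum f (S K)) with (rsum f K + f K) end.
    cbv beta. rewrite IHK.
    destruct (Nat.Even_or_Odd l) as [[h Hh]|[h Hh]]; subst l.
    - rewrite Nat.even_even. replace (Nat.div2 (2 * h)) with h by (rewrite Nat.div2_double; reflexivity).
      simpl andb.
      destruct (Nat.ltb_spec h K); destruct (Nat.ltb_spec h (S K)); destruct (Nat.eqb_spec (2*K) (2*h)); try lia; lra.
    - rewrite Nat.even_odd. simpl andb. destruct (Nat.eqb_spec (2*K) (2*h+1)); [lia|]. lra. }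
  rewrite G. destruct (Nat.Even_or_Odd l) as [[h Hh]|[h Hh]]; subst l.
  - rewrite Nat.even_even. replace (Nat.div2 (2 * h)) with h by (rewrite Nat.div2_double; reflexivity).
    destruct (Nat.ltb_spec h (2*h)). reflexivity.
    lia.
  - rewrite Nat.even_odd. reflexivity.
Qed.

Lemma E_bound : forall l lam, (2 <= l)%nat -> 0 <= lam ->
  (forall k, (k < l)%nat -> k <> 0%nat -> (2 * k <> l)%nat -> Rabs (2 * cos (thk l k)) <= lam) ->
  forall n, Rabs (INR (esum l n) - (1 + epsl l n) / INR l * INR (asum n)) <= Xs lam n.
Proof.
  intros l lam Hl Hlam Hk n.
  pose proof (INR_posl l ltac:(lia)) as Hlp.
  set (A := INR (asum n)).
  set (T := fun k => Sg (gk l k) n - (if Nat.eqb k 0 then A else 0)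
               - (if Nat.eqb (2 * k) l then (-1) ^ (S n) * A else 0)).
  assert (HS : rsum (fun k => Sg (gk l k) n) l = A + epsl l n * A + rsum T l).
  { unfold T. rewrite rsum_minus, rsum_minus. rewrite ind_half_sum by lia.
    assert (rsum (fun k => if Nat.eqb k 0 then A else 0) l = A).
    { destruct l; [lia|]. rewrite rsum_shift. simpl Nat.eqb. rewrite rsum_zero; [ring|]. intros; reflexivity. }
    rewrite H. unfold epsl. destruct (Nat.even l); ring. }
  rewrite esum_R by lia. rewrite HS.
  replace (/ INR l * (A + epsl l n * A + rsum T l) - (1 + epsl l n) / INR l * A)
    with (/ INR l * rsum T l) by (field; lra).
  rewrite Rabs_mult, Rabs_right by (apply Rle_ge; left; apply Rinv_0_lt_compat; auto).
  apply Rmult_le_reg_l with (INR l); auto. rewrite <- Rmult_assoc, Rinv_r, Rmult_1_l by lra.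
  rewrite <- rsum_const. apply rsum_abs. intros k Hkl. unfold T.
  destruct (Nat.eqb_spec k 0) as [E0|E0].
  - subst k. destruct (Nat.eqb_spec (2 * 0) l); [lia|].
    replace (Sg (gk l 0) n) with A.
    replace (A - A - 0) with 0 by ring. rewrite Rabs_R0. apply Xs_nonneg; auto.
    unfold A. rewrite <- Sg_one. unfold Sg. apply rsum_ext. intros. rewrite gk0. reflexivity.
  - destruct (Nat.eqb_spec (2 * k) l) as [E2|E2].
    + rewrite Sg_half by (auto; lia).
      match goal with |- Rabs ?x <= _ => replace x with 0 by (unfold A; ring) end.
      rewrite Rabs_R0. apply Xs_nonneg; auto.
    + replace (Sg (gk l k) n - 0 - 0) with (Sg (gk l k) n) by ring.
      apply Sg_other. lia. apply Hk; auto.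
Qed.

Lemma strip_rec : forall L n (g : nat -> R), g 0%nat = 0 -> g (L + 2)%nat = 0 ->
  rsum (fun r => INR (bpath (L + 2) (S n) r) * g (S r)) (L + 1) =
  rsum (fun r => INR (bpath (L + 2) n r) * (g r + g (S (S r)))) (L + 1).
Proof.
  intros L n g Hg0 HgL.
  set (l := (L + 2)%nat).
  rewrite (rsum_ext _ (fun r => INR (bleft l n r) * g (S r) +
        (if Nat.ltb r L then INR (bpath l n (S r)) else 0) * g (S r))).
  2: { intros r Hr. assert (Hm : (r mod l = r)%nat) by (apply Nat.mod_small; unfold l; lia).
       destruct (Nat.ltb_spec r L).
       - rewrite bS_oth by (rewrite Hm; unfold l; lia). rewrite plus_INR. ring.
       - rewrite bS_m2 by (try rewrite Hm; unfold l; lia). ring. }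
  rewrite rsum_plus.
  rewrite (rsum_ext (fun r => INR (bpath l n r) * (g r + g (S (S r))))
     (fun r => INR (bpath l n r) * g (S (S r)) + INR (bpath l n r) * g r)) by (intros; ring).
  rewrite rsum_plus. f_equal.
  - replace (L + 1)%nat with (S L) by lia.
    rewrite rsum_shift. simpl bleft. rewrite Rmult_0_l, Rplus_0_l.
    simpl rsum at 2.
    replace (S (S L)) with (L + 2)%nat by lia. rewrite HgL. rewrite Rmult_0_r, Rplus_0_r.
    apply rsum_ext. intros; reflexivity.
  - replace (L + 1)%nat with (S L) by lia.
    simpl rsum at 1. destruct (Nat.ltb_spec L L); [lia|]. rewrite Rmult_0_l, Rplus_0_r.
    rewrite (rsum_shift (fun r => INR (bpath l n r) * g r)). rewrite Hg0, Rmult_0_r, Rplus_0_l.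
    apply rsum_ext. intros i Hi. destruct (Nat.ltb_spec i L); [reflexivity|lia].
Qed.

Fixpoint minf (f : nat -> R) (k : nat) : R :=
  match k with O => 1 | S k => Rmin (minf f k) (f k) end.

Lemma minf_le : forall f k i, (i < k)%nat -> minf f k <= f i.
Proof.
  intros f k; induction k; intros i Hi; [lia|]. simpl.
  destruct (Nat.eq_dec i k). subst. apply Rmin_r.
  eapply Rle_trans. apply Rmin_l. apply IHk; lia.
Qed.

Lemma minf_pos : forall f k, (forall i, (i < k)%nat -> 0 < f i) -> 0 < minf f k.
Proof. intros f k H; induction k; simpl. lra. apply Rmin_glb_lt; auto. Qed.

Definition psi (l y : nat) : R := sin (PI * INR y / INR l).

Lemma ksum_bound : forall l, (2 <= l)%nat -> exists C mu0, 0 <= mu0 < 2 /\ 0 <= C /\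
  forall n, INR (ksum l n) <= C * mu0 ^ n.
Proof.
  intros l Hl. pose proof (INR_posl l ltac:(lia)) as Hlp. pose proof PI_RGT_0.
  set (mu0 := 2 * cos (PI / INR l)).
  assert (Hpl : 0 < PI / INR l <= PI / 2).
  { split. apply Rdiv_lt_0_compat; lra.
    apply Rmult_le_compat_l. lra. apply Rinv_le_contravar. lra.
    apply (le_INR 2 l) in Hl. simpl in Hl. lra. }
  assert (Hmu : 0 <= mu0 < 2).
  { unfold mu0. split.
    - assert (0 <= cos (PI / INR l)) by (apply cos_ge_0; lra). lra.
    - assert (Rabs (cos (PI / INR l)) < 1).
      { apply abs_lt1_of_sin. apply Rgt_not_eq. apply sin_gt_0; lra. }
      apply Rabs_def2 in H0. lra. }
  set (f := fun r => psi l (S r)).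
  assert (Hf : forall r, (r < l - 1)%nat -> 0 < f r).
  { intros r Hr. unfold f, psi. apply sin_gt_0.
    apply Rdiv_lt_0_compat; auto. apply Rmult_lt_0_compat; auto. apply lt_0_INR; lia.
    apply Rmult_lt_reg_r with (INR l); auto.
    replace (PI * INR (S r) / INR l * INR l) with (PI * INR (S r)) by (field; lra).
    apply Rmult_lt_compat_l; auto. apply lt_INR. lia. }
  set (m := minf f (l - 1)).
  assert (Hm : 0 < m) by (apply minf_pos; auto).
  set (K := fun n => rsum (fun r => INR (bpath l n r) * psi l (S r)) (l - 1)).
  assert (HK : forall n, K n = mu0 ^ n * psi l 1).
  { induction n.
    - unfold K. destruct l as [|[|L]]; try lia. simpl minus. rewrite rsum_shift.
      rewrite rsum_zero. simpl. ring. intros i _. simpl. apply Rmult_0_l.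
    - unfold K. replace l with (l - 2 + 2)%nat by lia.
      replace (l - 2 + 2 - 1)%nat with (l - 2 + 1)%nat by lia.
      rewrite strip_rec.
      + replace (l - 2 + 2)%nat with l by lia. replace (l - 2 + 1)%nat with (l - 1)%nat by lia.
        simpl pow. rewrite Rmult_assoc, <- IHn. unfold K. rewrite <- rsum_scal.
        apply rsum_ext. intros r _.
        assert (E : psi l r + psi l (S (S r)) = mu0 * psi l (S r)).
        { unfold mu0, psi. rewrite <- sin_eigen with (th := PI / INR l).
          f_equal; f_equal; rewrite ?S_INR; field; lra. }
        rewrite E; ring.
      + unfold psi. simpl INR. replace (PI * 0 / INR (l - 2 + 2)) with 0. apply sin_0.
        field. replace (l - 2 + 2)%nat with l by lia. lra.
      + unfold psi. replace (PI * INR (l - 2 + 2) / INR (l - 2 + 2)) with PI. apply sin_PI.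
        field. replace (l - 2 + 2)%nat with l by lia. lra. }
  exists (psi l 1 / m), mu0. split; auto. split.
  - unfold Rdiv. apply Rmult_le_pos. left. apply (Hf 0%nat). lia. left. apply Rinv_0_lt_compat; auto.
  - intros n. unfold ksum. rewrite <- rsum_nsum.
    apply Rmult_le_reg_r with m; auto.
    replace (psi l 1 / m * mu0 ^ n * m) with (K n) by (rewrite HK; field; lra).
    unfold K. rewrite Rmult_comm, <- rsum_scal. apply rsum_le. intros r Hr.
    rewrite Rmult_comm. apply Rmult_le_compat_l. apply pos_INR.
    apply (minf_le f (l-1) r Hr).
Qed.

Module WallisM.
From Coquelicot Require Import Coquelicot.

Definition W (n : nat) : R := RInt (fun x => sin x ^ n) 0 (PI / 2).

Lemma ex_W : forall n a b, ex_RInt (fun x => sin x ^ n) a b.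
Proof.
  intros n a b. apply (@ex_RInt_continuous R_CompleteNormedModule). intros z _.
  apply (ex_derive_continuous (fun x => sin x ^ n)). auto_derive. auto.
Qed.

Lemma W0 : W 0 = PI / 2.
Proof. unfold W. simpl. rewrite RInt_const. unfold scal; simpl. unfold mult; simpl. ring. Qed.

Lemma W1 : W 1 = 1.
Proof.
  unfold W. rewrite (RInt_ext _ sin) by (intros; simpl; ring).
  rewrite (is_RInt_unique sin 0 (PI/2) (minus ((fun x => - cos x) (PI/2)) ((fun x => - cos x) 0))).
  - simpl. rewrite cos_PI2, cos_0. unfold minus, plus, opp; simpl. ring.
  - apply (is_RInt_derive (fun x => - cos x) sin).
    + intros x _. auto_derive; auto. ring.
    + intros x _. apply continuity_pt_filterlim. apply continuity_sin.
Qed.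

Lemma W_rec : forall n, INR (S (S n)) * W (S (S n)) = INR (S n) * W n.
Proof.
  intros n.
  set (f := fun x => - cos x * sin x ^ (S n)).
  set (df := fun x => INR (S (S n)) * sin x ^ (S (S n)) - INR (S n) * sin x ^ n).
  assert (H : is_RInt df 0 (PI/2) (minus (f (PI/2)) (f 0))).
  { apply (@is_RInt_derive R_CompleteNormedModule f df).
    - intros x _. unfold f, df. auto_derive; auto.
      replace (match n with 0%nat => 1 | S _ => INR n + 1 end) with (INR (S n)) by (destruct n; reflexivity).
      rewrite (S_INR (S n)).
      replace (sin x ^ S (S n)) with (sin x * (sin x * sin x ^ n)) by reflexivity.
      pose proof (sin2_cos2 x) as E. unfold Rsqr in E.
      match goal with |- ?L = ?R => assert (HH : L - R = - INR (S n) * sin x ^ n * (sin x * sin x + cos x * cos x - 1)) by ring end.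
      rewrite E in HH. lra.
    - intros x _. unfold df. apply (ex_derive_continuous (fun x => INR (S (S n)) * sin x ^ S (S n) - INR (S n) * sin x ^ n)).
      auto_derive. auto. }
  assert (Hv : minus (f (PI/2)) (f 0) = 0).
  { unfold f. rewrite cos_PI2, sin_0. unfold minus, plus, opp; simpl. ring. }
  rewrite Hv in H. apply (@is_RInt_unique R_CompleteNormedModule) in H. unfold df in H.
  rewrite (RInt_ext _ (fun x => minus (scal (INR (S (S n))) (sin x ^ S (S n))) (scal (INR (S n)) (sin x ^ n)))) in H by (intros; reflexivity).
  rewrite (@RInt_minus R_CompleteNormedModule) in H. 2,3: apply (@ex_RInt_scal R_CompleteNormedModule); apply ex_W.
  rewrite (@RInt_scal R_CompleteNormedModule (fun x => sin x ^ S (S n))) in H by apply ex_W.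
  rewrite (@RInt_scal R_CompleteNormedModule (fun x => sin x ^ n)) in H by apply ex_W.
  assert (H' : INR (S (S n)) * W (S (S n)) - INR (S n) * W n = 0) by (unfold W; exact H).
  lra.
Qed.

Lemma W_decr : forall n, W (S n) <= W n.
Proof.
  intros n. unfold W. apply RInt_le. pose proof PI_RGT_0; lra. apply ex_W. apply ex_W.
  intros x Hx. simpl. pose proof (sin_ge_0 x ltac:(lra) ltac:(lra)).
  assert (sin x <= 1) by apply SIN_bound. pose proof (pow_le (sin x) n H).
  nra.
Qed.

End WallisM.
Import WallisM.

Definition cc (k : nat) : R := INR (binom (2 * k) k) / 4 ^ k.

Lemma cc0 : cc 0 = 1.
Proof. unfold cc. simpl. field. Qed.

Lemma cc_rec : forall k, cc (S k) = cc k * (2 * INR k + 1) / (2 * INR k + 2).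
Proof.
  intros k. pose proof (central_rec k) as H. apply (f_equal INR) in H.
  rewrite !mult_INR, plus_INR, mult_INR in H. simpl (INR 2) in H. simpl (INR 1) in H.
  rewrite S_INR in H. unfold cc. simpl pow.
  assert (0 < 4 ^ k) by (apply pow_lt; lra). pose proof (pos_INR k).
  apply Rmult_eq_reg_r with (4 * 4 ^ k * (2 * INR k + 2)). 2: nra.
  field_simplify; try lra; try nra.
Qed.

Lemma cc_pos : forall k, 0 < cc k.
Proof.
  induction k. rewrite cc0; lra. rewrite cc_rec. pose proof (pos_INR k).
  apply Rdiv_lt_0_compat; nra.
Qed.

Lemma W_even : forall k, W (2 * k) = PI / 2 * cc k.
Proof.
  induction k. simpl. rewrite W0, cc0. ring.
  replace (2 * S k)%nat with (S (S (2 * k))) by lia.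
  pose proof (W_rec (2 * k)) as H. rewrite !S_INR, mult_INR in H. simpl (INR 2) in H.
  rewrite IHk in H. rewrite cc_rec. pose proof (pos_INR k).
  apply Rmult_eq_reg_l with (2 * INR k + 2). 2: lra.
  transitivity ((2 * INR k + 1) * (PI / 2 * cc k)). nra. field. lra.
Qed.

Lemma W_odd : forall k, W (2 * k + 1) * (2 * INR k + 1) * cc k = 1.
Proof.
  induction k. simpl. rewrite W1, cc0. ring.
  replace (2 * S k + 1)%nat with (S (S (2 * k + 1))) by lia.
  pose proof (W_rec (2 * k + 1)) as H. rewrite !S_INR, plus_INR, mult_INR in H. simpl (INR 2) in H. simpl (INR 1) in H.
  rewrite cc_rec, S_INR. pose proof (pos_INR k).
  replace (W (S (S (2 * k + 1)))) with ((2 * INR k + 1 + 1) * W (2 * k + 1) / (2 * INR k + 1 + 1 + 1)).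
  transitivity (W (2 * k + 1) * (2 * INR k + 1) * cc k); [field; lra | exact IHk].
  apply Rmult_eq_reg_l with (2 * INR k + 1 + 1 + 1). 2: lra.
  transitivity ((2 * INR k + 1 + 1) * W (2 * k + 1)). field. lra. nra.
Qed.

Lemma cc_lower : forall k, 2 / (PI * (2 * INR k + 1)) <= cc k ^ 2.
Proof.
  intros k. pose proof (W_decr (2 * k)) as D. replace (S (2 * k)) with (2 * k + 1)%nat in D by lia.
  pose proof (W_odd k) as O. rewrite W_even in D. pose proof (cc_pos k). pose proof PI_RGT_0.
  pose proof (pos_INR k).
  assert (W (2 * k + 1) = / ((2 * INR k + 1) * cc k)).
  { apply Rmult_eq_reg_r with ((2 * INR k + 1) * cc k). 2: nra. rewrite Rinv_l by nra. rewrite <- Rmult_assoc. exact O. }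
  rewrite H2 in D.
  apply Rmult_le_reg_r with (PI * (2 * INR k + 1)). nra.
  replace (2 / (PI * (2 * INR k + 1)) * (PI * (2 * INR k + 1))) with 2 by (field; nra).
  apply Rmult_le_compat_r with (r := (2 * INR k + 1) * cc k) in D. 2: nra.
  rewrite Rinv_l in D by nra. simpl pow. nra.
Qed.

Lemma cc_upper : forall k, (1 <= k)%nat -> cc k ^ 2 <= 1 / (PI * INR k).
Proof.
  intros k Hk. destruct k as [|k]; [lia|].
  pose proof (W_decr (2 * k + 1)) as D.
  replace (S (2 * k + 1)) with (2 * S k)%nat in D by lia.
  rewrite W_even in D. pose proof (W_odd k) as O. pose proof (cc_pos k). pose proof PI_RGT_0.
  pose proof (pos_INR k). pose proof (cc_rec k) as CR.
  assert (W (2 * k + 1) = / ((2 * INR k + 1) * cc k)).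
  { apply Rmult_eq_reg_r with ((2 * INR k + 1) * cc k). 2: nra. rewrite Rinv_l by nra. rewrite <- Rmult_assoc. exact O. }
  rewrite H2 in D.
  assert (E : (2 * INR k + 1) * cc k = (2 * INR k + 2) * cc (S k)) by (rewrite CR; field; lra).
  rewrite E in D. pose proof (cc_pos (S k)). rewrite S_INR.
  apply Rmult_le_compat_r with (r := (2 * INR k + 2) * cc (S k)) in D. 2: nra.
  rewrite Rinv_l in D by nra.
  apply Rmult_le_reg_r with (PI * (INR k + 1)). nra.
  replace (1 / (PI * (INR k + 1)) * (PI * (INR k + 1))) with 1 by (field; nra).
  simpl pow. nra.
Qed.

Lemma x_even : forall k, INR (asum (2 * k)) / 2 ^ (2 * k) = cc k.
Proof.
  intros k. destruct (asum_closed k) as [E _]. rewrite E. unfold cc.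
  rewrite pow_mult. replace (2 ^ 2) with 4 by ring. reflexivity.
Qed.

Lemma x_odd : forall k, INR (asum (2 * k + 1)) / 2 ^ (2 * k + 1) = cc k * (2 * INR k + 1) / (2 * INR k + 2).
Proof.
  intros k. destruct (asum_closed k) as [_ E]. rewrite E. unfold cc.
  pose proof (central_odd k) as C. apply (f_equal INR) in C.
  rewrite !mult_INR, plus_INR, mult_INR in C. rewrite S_INR in C. simpl (INR 2) in C. simpl (INR 1) in C.
  rewrite pow_add, pow_mult. replace (2 ^ 2) with 4 by ring. simpl (2 ^ 1).
  assert (0 < 4 ^ k) by (apply pow_lt; lra). pose proof (pos_INR k).
  apply Rmult_eq_reg_r with (4 ^ k * 2 * (2 * INR k + 2)). 2: nra.
  field_simplify; try lra; try nra.
Qed.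

Lemma div_le_d : forall a b d, 0 < d -> a <= b -> a / d <= b / d.
Proof. intros. unfold Rdiv. apply Rmult_le_compat_r; auto. left; apply Rinv_0_lt_compat; auto. Qed.

Lemma mul_pos4 : forall a b c d, 0 < a -> 0 < b -> 0 < c -> 0 < d -> 0 < a * b * c * d.
Proof. intros. repeat apply Rmult_lt_0_compat; auto. Qed.

Lemma xbounds : forall n, (1 <= n)%nat ->
  let x := INR (asum n) / 2 ^ n in
  0 <= x /\ (1 - 2 / INR n) * (2 / (PI * INR n)) <= x ^ 2 /\ x ^ 2 <= 2 / (PI * INR n).
Proof.
  intros n Hn x. pose proof PI_RGT_0 as Hpi.
  assert (Hx0 : 0 <= x). { unfold x. apply Rmult_le_pos. apply pos_INR. left. apply Rinv_0_lt_compat, pow_lt; lra. }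
  split; auto.
  destruct (Nat.Even_or_Odd n) as [[k Hk]|[k Hk]]; subst n.
  - assert (Hk1 : (1 <= k)%nat) by lia.
    assert (HkR : 1 <= INR k) by (apply (le_INR 1); auto).
    unfold x. rewrite x_even. rewrite mult_INR. replace (INR 2) with 2 by (simpl; lra).
    pose proof (cc_lower k). pose proof (cc_upper k Hk1). split.
    + eapply Rle_trans; [|exact H].
      set (D := PI * INR k * INR k * (2 * INR k + 1)).
      assert (HD : 0 < D) by (unfold D; apply mul_pos4; try apply pow_lt; lra).
      replace ((1 - 2 / (2 * INR k)) * (2 / (PI * (2 * INR k)))) with (((INR k - 1) * (2 * INR k + 1)) / D) by (unfold D; field; lra).
      replace (2 / (PI * (2 * INR k + 1))) with ((2 * INR k * INR k) / D) by (unfold D; field; lra).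
      apply div_le_d; auto. nra.
    + eapply Rle_trans; [exact H0|]. right. field. lra.
  - unfold x. rewrite x_odd. rewrite plus_INR, mult_INR. replace (INR 2) with 2 by (simpl; lra). replace (INR 1) with 1 by (simpl; lra).
    pose proof (cc_lower k). pose proof (pos_INR k). pose proof (cc_pos k).
    set (c := cc k) in *.
    destruct k as [|k'].
    + simpl INR. replace c with 1 by (unfold c; symmetry; apply cc0). pose proof PI_4.
      split.
      * apply Rle_trans with 0; [| apply pow2_ge_0].
        assert (0 < 2 / (PI * (2 * 0 + 1))) by (apply Rdiv_lt_0_compat; lra).
        replace (1 - 2 / (2 * 0 + 1)) with (-1) by field. nra.
      * replace ((1 * (2 * 0 + 1) / (2 * 0 + 2)) ^ 2) with (2 * / 8) by field.
        replace (2 / (PI * (2 * 0 + 1))) with (2 * / PI) by (field; lra).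
        apply Rmult_le_compat_l. lra. apply Rinv_le_contravar; lra.
    + set (k := S k') in *. assert (Hk1 : (1 <= k)%nat) by (unfold k; lia).
      assert (HkR : 1 <= INR k) by (apply (le_INR 1); auto).
      pose proof (cc_upper k Hk1) as U. fold c in U.
      assert (Hc2 : c ^ 2 <= 1 / (PI * INR k)) by exact U.
      split.
      * apply Rle_trans with ((2 / (PI * (2 * INR k + 1))) * ((2 * INR k + 1) / (2 * INR k + 2)) ^ 2).
        -- set (D := PI * (2 * INR k + 1) * (2 * INR k + 1) * (2 * INR k + 2) ^ 2).
           assert (HD : 0 < D) by (unfold D; apply mul_pos4; try apply pow_lt; lra).
           replace ((1 - 2 / (2 * INR k + 1)) * (2 / (PI * (2 * INR k + 1)))) with ((2 * (2 * INR k - 1) * (2 * INR k + 2) ^ 2) / D) by (unfold D; field; lra).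
           replace (2 / (PI * (2 * INR k + 1)) * ((2 * INR k + 1) / (2 * INR k + 2)) ^ 2) with (2 * (2 * INR k + 1) ^ 3 / D) by (unfold D; field; lra).
           apply div_le_d; auto. nra.
        -- replace ((c * (2 * INR k + 1) / (2 * INR k + 2)) ^ 2) with (c ^ 2 * ((2 * INR k + 1) / (2 * INR k + 2)) ^ 2) by (field; lra).
           apply Rmult_le_compat_r. apply pow_le. left; apply Rdiv_lt_0_compat; lra. exact H.
      * apply Rle_trans with ((1 / (PI * INR k)) * ((2 * INR k + 1) / (2 * INR k + 2)) ^ 2).
        -- replace ((c * (2 * INR k + 1) / (2 * INR k + 2)) ^ 2) with (c ^ 2 * ((2 * INR k + 1) / (2 * INR k + 2)) ^ 2) by (field; lra).
           apply Rmult_le_compat_r. apply pow_le. left; apply Rdiv_lt_0_compat; lra. exact Hc2.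
        -- set (D := PI * INR k * (2 * INR k + 1) * (2 * INR k + 2) ^ 2).
           assert (HD : 0 < D) by (unfold D; apply mul_pos4; try apply pow_lt; lra).
           replace (1 / (PI * INR k) * ((2 * INR k + 1) / (2 * INR k + 2)) ^ 2) with ((2 * INR k + 1) ^ 3 / D) by (unfold D; field; lra).
           replace (2 / (PI * (2 * INR k + 1))) with (2 * INR k * (2 * INR k + 2) ^ 2 / D) by (unfold D; field; lra).
           apply div_le_d; auto. nra.
Qed.

Definition a_asy (n : nat) : R := sqrt (2 / PI) * / sqrt (INR n) * 2 ^ n.

Lemma a_asy_pos : forall n, (1 <= n)%nat -> 0 < a_asy n.
Proof.
  intros n Hn. pose proof PI_RGT_0. assert (0 < INR n) by (apply lt_0_INR; lia).
  unfold a_asy. apply Rmult_lt_0_compat. apply Rmult_lt_0_compat.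
  apply sqrt_lt_R0. apply Rdiv_lt_0_compat; lra. apply Rinv_0_lt_compat, sqrt_lt_R0; auto.
  apply pow_lt; lra.
Qed.

Lemma A_asym : forall n, (1 <= n)%nat ->
  Rabs (INR (asum n) - a_asy n) <= 2 * a_asy n / INR n.
Proof.
  intros n Hn. pose proof PI_RGT_0. assert (Hn0 : 0 < INR n) by (apply lt_0_INR; lia).
  assert (Hn1 : 1 <= INR n) by (apply (le_INR 1); auto).
  destruct (xbounds n Hn) as [Hx0 [Hlo Hhi]].
  set (x := INR (asum n) / 2 ^ n) in *.
  set (y := sqrt (2 / PI) * / sqrt (INR n)).
  assert (Hp : 0 < 2 ^ n) by (apply pow_lt; lra).
  assert (Hy : 0 < y).
  { unfold y. apply Rmult_lt_0_compat. apply sqrt_lt_R0. apply Rdiv_lt_0_compat; lra.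
    apply Rinv_0_lt_compat, sqrt_lt_R0; auto. }
  assert (Hy2 : y ^ 2 = 2 / (PI * INR n)).
  { unfold y. simpl. rewrite Rmult_1_r.
    replace (sqrt (2 / PI) * / sqrt (INR n) * (sqrt (2 / PI) * / sqrt (INR n)))
      with ((sqrt (2 / PI) * sqrt (2 / PI)) / (sqrt (INR n) * sqrt (INR n))).
    rewrite !sqrt_sqrt by (first [left; apply Rdiv_lt_0_compat; lra | lra]). field. lra.
    field. apply Rgt_not_eq. apply sqrt_lt_R0. auto. }
  assert (Ha : a_asy n = y * 2 ^ n) by (unfold a_asy, y; ring).
  assert (HA : INR (asum n) = x * 2 ^ n) by (unfold x; field; lra).
  rewrite Ha, HA.
  replace (x * 2 ^ n - y * 2 ^ n) with ((x - y) * 2 ^ n) by ring.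
  rewrite Rabs_mult, (Rabs_right (2 ^ n)) by lra.
  replace (2 * (y * 2 ^ n) / INR n) with ((2 / INR n * y) * 2 ^ n) by (field; lra).
  apply Rmult_le_compat_r. lra.
  rewrite <- Hy2 in Hlo, Hhi.
  assert (Hxy : x <= y) by nra.
  rewrite Rabs_left1 by lra.
  assert (y * (y - x) <= y ^ 2 - x ^ 2) by nra.
  assert (y ^ 2 - x ^ 2 <= 2 / INR n * y ^ 2).
  { replace (y ^ 2) with (y ^ 2 * 1) by ring. nra. }
  apply Rmult_le_reg_l with y; auto. nra.
Qed.

Definition w (n : nat) : R := / ((INR n + 1) * sqrt (INR n + 1)).

Lemma sq_pos : forall n, 0 < sqrt (INR n + 1).
Proof. intros. apply sqrt_lt_R0. pose proof (pos_INR n). lra. Qed.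

Lemma w_pos : forall n, 0 < w n.
Proof. intros. unfold w. apply Rinv_0_lt_compat. pose proof (pos_INR n). pose proof (sq_pos n). nra. Qed.

Lemma w_step : forall n, w n <= (1 + 3 / (INR n + 1)) * w (S n).
Proof.
  intros n. unfold w. rewrite S_INR. pose proof (pos_INR n) as Hn.
  set (s := sqrt (INR n + 1)). set (t := sqrt (INR n + 1 + 1)).
  assert (Hs : 0 < s) by apply sq_pos.
  assert (Ht : 0 < t) by (apply sqrt_lt_R0; lra).
  assert (Hs2 : s * s = INR n + 1) by (apply sqrt_sqrt; lra).
  assert (Ht2 : t * t = INR n + 1 + 1) by (apply sqrt_sqrt; lra).
  assert (Key : (INR n + 2) * t <= (INR n + 4) * s).
  { assert (0 <= (INR n + 2) * t) by nra. assert (0 <= (INR n + 4) * s) by nra.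
    assert (((INR n + 2) * t) * ((INR n + 2) * t) <= ((INR n + 4) * s) * ((INR n + 4) * s)).
    { replace (((INR n + 2) * t) * ((INR n + 2) * t)) with ((INR n + 2) * (INR n + 2) * (t * t)) by ring.
      replace (((INR n + 4) * s) * ((INR n + 4) * s)) with ((INR n + 4) * (INR n + 4) * (s * s)) by ring.
      rewrite Hs2, Ht2. nra. }
    nra. }
  replace ((1 + 3 / (INR n + 1)) * / ((INR n + 1 + 1) * t)) with ((INR n + 4) / ((INR n + 1) * (INR n + 2) * t)) by (field; lra).
  apply Rmult_le_reg_r with ((INR n + 1) * s * ((INR n + 2) * t)).
  apply Rmult_lt_0_compat; nra.
  replace (/ ((INR n + 1) * s) * ((INR n + 1) * s * ((INR n + 2) * t))) with ((INR n + 2) * t) by (field; lra).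
  replace ((INR n + 4) / ((INR n + 1) * (INR n + 2) * t) * ((INR n + 1) * s * ((INR n + 2) * t))) with ((INR n + 4) * s) by (field; lra).
  exact Key.
Qed.

Lemma w_decr : forall n, w (S n) <= w n.
Proof.
  intros n. unfold w. rewrite S_INR. pose proof (pos_INR n).
  apply Rinv_le_contravar. pose proof (sq_pos n). nra.
  apply Rmult_le_compat; try lra. left; apply sq_pos. apply sqrt_le_1_alt. lra.
Qed.

Lemma w_mono : forall m n, (m <= n)%nat -> w n <= w m.
Proof.
  intros m n H. induction H. lra. eapply Rle_trans. apply w_decr. auto.
Qed.

Lemma decay : forall (rho c : R) (Y : nat -> R), 0 <= rho < 1 -> 0 <= c ->
  (forall n, Y (S n) <= rho * Y n + c * w n) -> exists K, 0 <= K /\ forall n, Y n <= K * w n.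
Proof.
  intros rho c Y Hr Hc HY.
  set (B := Rmax (Rmax (Y 0%nat) 0) (c / (1 - rho))).
  assert (HB0 : 0 <= B) by (unfold B; eapply Rle_trans; [|apply Rmax_l]; apply Rmax_r).
  assert (HBc : c / (1 - rho) <= B) by apply Rmax_r.
  assert (HBc' : c <= (1 - rho) * B).
  { apply Rmult_le_compat_l with (r := 1 - rho) in HBc. 2: lra.
    replace ((1 - rho) * (c / (1 - rho))) with c in HBc by (field; lra). auto. }
  assert (HYB : forall n, Y n <= B).
  { induction n. unfold B. eapply Rle_trans; [|apply Rmax_l]. apply Rmax_l.
    eapply Rle_trans. apply HY. pose proof (w_pos n).
    assert (w n <= 1).
    { assert (w 0 = 1) by (unfold w; simpl; replace (0 + 1) with 1 by ring; rewrite sqrt_1; field).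
      rewrite <- H0. apply w_mono. lia. }
    assert (rho * Y n <= rho * B) by (apply Rmult_le_compat_l; lra).
    assert (c * w n <= c * 1) by (apply Rmult_le_compat_l; lra). lra. }
  destruct (INR_archimed 1 (3 * (1 + rho) / (1 - rho))) as [N0 HN0]. lra.
  rewrite Rmult_1_r in HN0.
  set (K := Rmax (2 * c / (1 - rho)) (B / w N0)).
  assert (HK0 : 0 <= K).
  { unfold K. eapply Rle_trans; [|apply Rmax_r]. unfold Rdiv. apply Rmult_le_pos; auto.
    left; apply Rinv_0_lt_compat, w_pos. }
  assert (HK1 : c <= K * (1 - rho) / 2).
  { assert (2 * c / (1 - rho) <= K) by apply Rmax_l.
    apply Rmult_le_compat_r with (r := (1 - rho) / 2) in H. 2: lra.
    replace (2 * c / (1 - rho) * ((1 - rho) / 2)) with c in H by (field; lra). lra. }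
  assert (HK2 : forall m, (m <= N0)%nat -> Y m <= K * w m).
  { intros m Hm. eapply Rle_trans. apply HYB.
    assert (B / w N0 <= K) by apply Rmax_r.
    pose proof (w_mono m N0 Hm). pose proof (w_pos N0).
    apply Rle_trans with (B / w N0 * w m).
    - replace B with (B / w N0 * w N0) at 1 by (field; lra). apply Rmult_le_compat_l; auto.
      unfold Rdiv. apply Rmult_le_pos; auto. left; apply Rinv_0_lt_compat; auto.
    - apply Rmult_le_compat_r; auto. left; apply w_pos. }
  exists K. split; auto.
  induction n.
  - apply HK2. lia.
  - destruct (le_lt_dec (S n) N0) as [Hle|Hgt]. apply HK2; auto.
    eapply Rle_trans. apply HY.
    pose proof (w_pos n). pose proof (w_step n).
    assert (Hn : INR N0 <= INR n) by (apply le_INR; lia).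
    assert (H3 : 3 / (INR n + 1) <= (1 - rho) / (1 + rho)).
    { pose proof (pos_INR n).
      apply Rmult_le_reg_r with ((INR n + 1) * (1 + rho) / (1 - rho)).
      apply Rdiv_lt_0_compat; nra.
      replace (3 / (INR n + 1) * ((INR n + 1) * (1 + rho) / (1 - rho))) with (3 * (1 + rho) / (1 - rho)) by (field; lra).
      replace ((1 - rho) / (1 + rho) * ((INR n + 1) * (1 + rho) / (1 - rho))) with (INR n + 1) by (field; lra).
      lra. }
    apply Rle_trans with ((rho * K + c) * w n). nra.
    apply Rle_trans with ((rho * K + c) * ((1 + 3 / (INR n + 1)) * w (S n))).
    apply Rmult_le_compat_l; auto. nra.
    rewrite <- Rmult_assoc. apply Rmult_le_compat_r. left; apply w_pos.
    apply Rle_trans with (K * (1 + rho) / 2 * (1 + (1 - rho) / (1 + rho))).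
    apply Rmult_le_compat. nra. assert (0 <= 3 / (INR n + 1)).
    { unfold Rdiv. apply Rmult_le_pos. lra. left. apply Rinv_0_lt_compat. pose proof (pos_INR n). lra. }
    lra. lra. lra.
    right. field. lra.
Qed.

Lemma cc_le_sqrt : forall k, cc k * sqrt (2 * INR k + 1) <= 1.
Proof.
  intros k. pose proof (pos_INR k). pose proof (cc_pos k).
  set (s := sqrt (2 * INR k + 1)).
  assert (Hs : 0 < s) by (apply sqrt_lt_R0; lra).
  assert (Hs2 : s * s = 2 * INR k + 1) by (apply sqrt_sqrt; lra).
  assert (Hc2 : cc k ^ 2 * (2 * INR k + 1) <= 1).
  { destruct k as [|k]. rewrite cc0. simpl. lra.
    pose proof (cc_upper (S k) ltac:(lia)). pose proof PI2_3_2.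
    pose proof (pos_INR (S k)). pose proof (pos_INR k). assert (1 <= INR (S k)) by (rewrite S_INR; lra).
    apply Rle_trans with (1 / (PI * INR (S k)) * (2 * INR (S k) + 1)).
    apply Rmult_le_compat_r; lra.
    apply Rmult_le_reg_r with (PI * INR (S k)). nra.
    replace (1 / (PI * INR (S k)) * (2 * INR (S k) + 1) * (PI * INR (S k))) with (2 * INR (S k) + 1) by (field; nra).
    nra. }
  assert (0 <= cc k * s) by nra.
  assert ((cc k * s) * (cc k * s) <= 1) by (replace ((cc k * s) * (cc k * s)) with (cc k ^ 2 * (s * s)) by ring; rewrite Hs2; lra).
  nra.
Qed.

Lemma a0_bound : forall n, INR (apath n 0) / 2 ^ n <= 2 * w n.
Proof.
  intros n. pose proof (w_pos n).
  destruct (Nat.Even_or_Odd n) as [[k Hk]|[k Hk]]; subst n.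
  - pose proof (asum_rec_R (2 * k)) as R.
    pose proof (x_even k) as X0. pose proof (x_odd k) as X1.
    replace (S (2 * k)) with (2 * k + 1)%nat in R by lia.
    assert (Hp : 0 < 2 ^ (2 * k)) by (apply pow_lt; lra).
    assert (E0 : INR (asum (2 * k)) = cc k * 2 ^ (2 * k)) by (rewrite <- X0; field; lra).
    assert (E1 : INR (asum (2 * k + 1)) = cc k * (2 * INR k + 1) / (2 * INR k + 2) * (2 * 2 ^ (2 * k))).
    { rewrite <- X1. rewrite pow_add. simpl (2 ^ 1). field. lra. }
    pose proof (pos_INR k).
    assert (Ea : INR (apath (2 * k) 0) / 2 ^ (2 * k) = cc k / (INR k + 1)).
    { apply Rmult_eq_reg_r with (2 ^ (2 * k)). 2: lra.
      replace (INR (apath (2 * k) 0) / 2 ^ (2 * k) * 2 ^ (2 * k)) with (INR (apath (2 * k) 0)) by (field; lra).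
      replace (INR (apath (2 * k) 0)) with (2 * INR (asum (2 * k)) - INR (asum (2 * k + 1))) by lra.
      rewrite E0, E1. field. lra. }
    rewrite Ea. unfold w. rewrite mult_INR. replace (INR 2) with 2 by (simpl; lra).
    pose proof (cc_le_sqrt k). pose proof (cc_pos k).
    set (s := sqrt (2 * INR k + 1)) in *.
    assert (Hs : 0 < s) by (apply sqrt_lt_R0; lra).
    apply Rle_trans with (/ ((INR k + 1) * s)).
    + apply Rmult_le_reg_r with ((INR k + 1) * s). nra.
      rewrite Rinv_l by nra. replace (cc k / (INR k + 1) * ((INR k + 1) * s)) with (cc k * s) by (field; lra). lra.
    + replace (2 * / ((2 * INR k + 1) * s)) with (/ ((INR k + 1/2) * s)) by (field; nra).
      apply Rinv_le_contravar. nra. nra.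
  - rewrite (apath_parity _ 0 k) by lia. simpl INR. unfold Rdiv. rewrite Rmult_0_l. lra.
Qed.

Lemma Xs_decay : forall lam, 0 <= lam < 2 -> exists K1, 0 <= K1 /\ forall n, Xs lam n <= K1 * 2 ^ n * w n.
Proof.
  intros lam Hl.
  destruct (decay (lam / 2) 1 (fun n => Xs lam n / 2 ^ n)) as [K [HK0 HK]].
  - split; lra.
  - lra.
  - intros n. simpl Xs. simpl pow. pose proof (a0_bound n).
    assert (Hp : 0 < 2 ^ n) by (apply pow_lt; lra).
    replace ((lam * Xs lam n + INR (apath n 0)) / (2 * 2 ^ n)) with
      (lam / 2 * (Xs lam n / 2 ^ n) + (INR (apath n 0) / 2 ^ n) / 2) by (field; lra).
    lra.
  - exists K. split; auto. intros n. specialize (HK n). simpl in HK.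
    assert (Hp : 0 < 2 ^ n) by (apply pow_lt; lra).
    apply Rmult_le_compat_r with (r := 2 ^ n) in HK. 2: lra.
    replace (Xs lam n / 2 ^ n * 2 ^ n) with (Xs lam n) in HK by (field; lra). lra.
Qed.

Lemma K_decay : forall l, (2 <= l)%nat -> exists K2, 0 <= K2 /\ forall n, INR (ksum l n) <= K2 * 2 ^ n * w n.
Proof.
  intros l Hl. destruct (ksum_bound l Hl) as [C [mu0 [Hmu [HC HB]]]].
  destruct (decay (mu0 / 2) 0 (fun n => (mu0 / 2) ^ n)) as [K [HK0 HK]].
  - split; lra.
  - lra.
  - intros n. simpl. lra.
  - exists (C * K). split. apply Rmult_le_pos; auto. intros n.
    eapply Rle_trans. apply HB.
    replace (mu0 ^ n) with ((mu0 / 2) ^ n * 2 ^ n) by (rewrite <- Rpow_mult_distr; f_equal; field).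
    specialize (HK n). simpl in HK.
    assert (Hp : 0 < 2 ^ n) by (apply pow_lt; lra).
    replace (C * K * 2 ^ n * w n) with (C * (K * w n) * 2 ^ n) by ring.
    rewrite <- Rmult_assoc. apply Rmult_le_compat_r. lra. apply Rmult_le_compat_l; auto.
Qed.

Lemma Rabs_div2 : forall x, Rabs (x / 2) = Rabs x / 2.
Proof. intros. unfold Rdiv. rewrite Rabs_mult, (Rabs_right (/ 2)) by lra. reflexivity. Qed.

Lemma pow_m1_bound : forall k, -1 <= (-1) ^ k <= 1.
Proof. intros k; induction k; simpl; lra. Qed.

Lemma b_asym_eq : forall l n, (1 <= l)%nat -> b_asym l n = (1 + (1 + epsl l n) / INR l) / 2 * a_asym n.
Proof.
  intros l n Hl. pose proof (INR_posl l Hl). unfold b_asym, epsl.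
  destruct (Nat.even l); field; lra.
Qed.

Lemma main_bound : forall l, (2 <= l)%nat -> exists Ct, 0 <= Ct /\ forall n, (1 <= n)%nat ->
  Rabs (INR (bsum l n) - b_asym l n) <= Ct * (/ sqrt (INR n) * 2 ^ n) / INR n.
Proof.
  intros l Hl.
  destruct (lam_exists l Hl) as [lam [Hlam Hk]].
  destruct (Xs_decay lam Hlam) as [K1 [HK1 HX]].
  destruct (K_decay l Hl) as [K2 [HK2 HKk]].
  pose proof PI_RGT_0 as Hpi.
  assert (Hs : 0 < sqrt (2 / PI)) by (apply sqrt_lt_R0; apply Rdiv_lt_0_compat; lra).
  exists (2 * sqrt (2 / PI) + K1 / 2 + K2 / 2). split. lra.
  intros n Hn.
  assert (HnR : 1 <= INR n) by (apply (le_INR 1); auto).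
  pose proof (INR_posl l ltac:(lia)) as Hlp.
  assert (HlR : 2 <= INR l) by (apply (le_INR 2); auto).
  pose proof (main_identity l n Hl) as MI. apply (f_equal INR) in MI.
  rewrite !plus_INR, mult_INR in MI. replace (INR 2) with 2 in MI by (simpl; lra).
  set (A := INR (asum n)) in *. set (E := INR (esum l n)) in *. set (Kk := INR (ksum l n)) in *.
  pose proof (E_bound l lam Hl (proj1 Hlam) Hk n) as EB. fold A E in EB.
  pose proof (A_asym n Hn) as AB. fold A in AB.
  replace (a_asy n) with (a_asym n) in AB by reflexivity.
  set (g := (1 + (1 + epsl l n) / INR l) / 2).
  assert (Hg : 0 <= g <= 1).
  { unfold g, epsl. destruct (Nat.even l).
    - pose proof (pow_m1_bound (S n)). split.
      + apply Rmult_le_pos; [|lra]. assert (0 <= (1 + (-1) ^ S n) / INR l) by (apply Rmult_le_pos; [lra|left; apply Rinv_0_lt_compat; lra]). lra.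
      + assert ((1 + (-1) ^ S n) / INR l <= 1).
        { apply Rmult_le_reg_r with (INR l); auto. replace ((1 + (-1) ^ S n) / INR l * INR l) with (1 + (-1) ^ S n) by (field; lra). lra. }
        lra.
    - split.
      + apply Rmult_le_pos; [|lra]. assert (0 <= (1 + 0) / INR l) by (apply Rmult_le_pos; [lra|left; apply Rinv_0_lt_compat; lra]). lra.
      + assert ((1 + 0) / INR l <= 1).
        { apply Rmult_le_reg_r with (INR l); auto. replace ((1 + 0) / INR l * INR l) with 1 by (field; lra). lra. }
        lra. }
  rewrite b_asym_eq by lia. fold g.
  assert (Hb : INR (bsum l n) - g * a_asym n =
      g * (A - a_asym n) + (E - (1 + epsl l n) / INR l * A) / 2 + Kk / 2).
  { unfold g. replace (INR (bsum l n)) with ((A + E + Kk) / 2) by lra. field. lra. }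
  rewrite Hb.
  set (D := / sqrt (INR n) * 2 ^ n).
  assert (Hsn : 0 < sqrt (INR n)) by (apply sqrt_lt_R0; lra).
  assert (Hp : 0 < 2 ^ n) by (apply pow_lt; lra).
  assert (HD : 0 < D) by (unfold D; apply Rmult_lt_0_compat; [apply Rinv_0_lt_compat|]; lra).
  assert (Ha : a_asym n = sqrt (2 / PI) * D) by (unfold a_asym, D; ring).
  assert (Hw : 2 ^ n * w n <= D / INR n).
  { unfold D, w. pose proof (sq_pos n).
    assert (sqrt (INR n) <= sqrt (INR n + 1)) by (apply sqrt_le_1_alt; lra).
    replace (/ sqrt (INR n) * 2 ^ n / INR n) with (2 ^ n * / (INR n * sqrt (INR n))) by (field; lra).
    apply Rmult_le_compat_l. lra. apply Rinv_le_contravar. nra.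
    apply Rmult_le_compat; lra. }
  pose proof (Xs_nonneg lam (proj1 Hlam) n).
  pose proof (HX n). pose proof (HKk n).
  assert (HKk0 : 0 <= Kk) by apply pos_INR.
  eapply Rle_trans. apply Rabs_triang.
  eapply Rle_trans. apply Rplus_le_compat_l. rewrite Rabs_right by lra. apply Rle_refl.
  eapply Rle_trans. apply Rplus_le_compat_r. apply Rabs_triang.
  rewrite Rabs_mult, (Rabs_right g) by lra.
  rewrite Rabs_div2.
  assert (T1 : g * Rabs (A - a_asym n) <= 2 * sqrt (2 / PI) * (D / INR n)).
  { apply Rle_trans with (1 * (2 * a_asym n / INR n)).
    apply Rmult_le_compat; try lra. apply Rabs_pos.
    rewrite Ha. right. field. lra. }
  assert (T2 : Xs lam n <= K1 * (D / INR n)).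
  { eapply Rle_trans. exact H0. rewrite Rmult_assoc. apply Rmult_le_compat_l; auto. }
  assert (T3 : Kk <= K2 * (D / INR n)).
  { eapply Rle_trans. exact H1. rewrite Rmult_assoc. apply Rmult_le_compat_l; auto. }
  replace ((2 * sqrt (2 / PI) + K1 / 2 + K2 / 2) * D / INR n) with
    (2 * sqrt (2 / PI) * (D / INR n) + K1 * (D / INR n) * / 2 + K2 * (D / INR n) / 2) by (field; lra).
  lra.
Qed.

Theorem theorem2p12 (l : nat) (hl : (2 <= l)%nat) :
  Un_cv (fun n => INR (bsum l n) / b_asym l n) 1 /\
  (exists C : R, exists N : nat, forall n : nat, (N <= n)%nat ->
     Rabs (INR (bsum l n) - b_asym l n) / (/ sqrt (INR n) * 2 ^ n)
       <= C * / INR n).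
Proof.
  destruct (main_bound l hl) as [Ct [HCt HB]].
  pose proof PI_RGT_0 as Hpi.
  assert (Hs : 0 < sqrt (2 / PI)) by (apply sqrt_lt_R0; apply Rdiv_lt_0_compat; lra).
  assert (HlR : 2 <= INR l) by (apply (le_INR 2); auto).
  assert (Hba : forall n, (1 <= n)%nat -> sqrt (2 / PI) * (/ sqrt (INR n) * 2 ^ n) / 2 <= b_asym l n).
  { intros n Hn. rewrite b_asym_eq by lia. unfold a_asym.
    assert (HnR : 1 <= INR n) by (apply (le_INR 1); auto).
    assert (Hsn : 0 < sqrt (INR n)) by (apply sqrt_lt_R0; lra).
    assert (Hp : 0 < 2 ^ n) by (apply pow_lt; lra).
    assert (HD : 0 < sqrt (2 / PI) * / sqrt (INR n) * 2 ^ n).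
    { apply Rmult_lt_0_compat; [apply Rmult_lt_0_compat; [|apply Rinv_0_lt_compat]|]; lra. }
    assert (1 / 2 <= (1 + (1 + epsl l n) / INR l) / 2).
    { unfold epsl. destruct (Nat.even l).
      - pose proof (pow_m1_bound (S n)).
        assert (0 <= (1 + (-1) ^ S n) / INR l) by (apply Rmult_le_pos; [lra|left; apply Rinv_0_lt_compat; lra]). lra.
      - assert (0 <= (1 + 0) / INR l) by (apply Rmult_le_pos; [lra|left; apply Rinv_0_lt_compat; lra]). lra. }
    replace (sqrt (2 / PI) * (/ sqrt (INR n) * 2 ^ n) / 2) with (1 / 2 * (sqrt (2 / PI) * / sqrt (INR n) * 2 ^ n)) by (field; lra).
    apply Rmult_le_compat_r; lra. }
  split.
  - intros eps Heps.
    destruct (INR_archimed (eps * sqrt (2 / PI)) (2 * Ct)) as [N HN].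
    { apply Rmult_lt_0_compat; lra. }
    exists (S N). intros n Hn.
    assert (Hn1 : (1 <= n)%nat) by lia.
    assert (HnR : INR N + 1 <= INR n) by (rewrite <- S_INR; apply le_INR; lia).
    pose proof (pos_INR N).
    assert (Hsn : 0 < sqrt (INR n)) by (apply sqrt_lt_R0; lra).
    assert (Hp : 0 < 2 ^ n) by (apply pow_lt; lra).
    set (D := / sqrt (INR n) * 2 ^ n) in *.
    assert (HD : 0 < D) by (unfold D; apply Rmult_lt_0_compat; [apply Rinv_0_lt_compat|]; lra).
    pose proof (Hba n Hn1) as Hb. pose proof (HB n Hn1) as HB1. fold D in Hb, HB1.
    assert (Hbp : 0 < b_asym l n) by (eapply Rlt_le_trans; [|exact Hb]; apply Rmult_lt_0_compat; [apply Rmult_lt_0_compat|]; lra).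
    unfold Rdist.
    replace (INR (bsum l n) / b_asym l n - 1) with ((INR (bsum l n) - b_asym l n) / b_asym l n) by (field; lra).
    unfold Rdiv. rewrite Rabs_mult, (Rabs_right (/ b_asym l n)) by (left; apply Rinv_0_lt_compat; auto).
    apply Rle_lt_trans with (Ct * D / INR n * / (sqrt (2 / PI) * D / 2)).
    + apply Rmult_le_compat; auto. apply Rabs_pos. left; apply Rinv_0_lt_compat; auto.
      apply Rinv_le_contravar; auto. apply Rmult_lt_0_compat; [apply Rmult_lt_0_compat|]; lra.
    + replace (Ct * D / INR n * / (sqrt (2 / PI) * D / 2)) with (2 * Ct / (sqrt (2 / PI) * INR n)) by (field; repeat split; lra).
      apply Rmult_lt_reg_r with (sqrt (2 / PI) * INR n). apply Rmult_lt_0_compat; lra.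
      replace (2 * Ct / (sqrt (2 / PI) * INR n) * (sqrt (2 / PI) * INR n)) with (2 * Ct) by (field; split; lra).
      apply Rlt_le_trans with (INR N * (eps * sqrt (2 / PI))). lra.
      replace (eps * (sqrt (2 / PI) * INR n)) with (INR n * (eps * sqrt (2 / PI))) by ring.
      apply Rmult_le_compat_r. apply Rmult_le_pos; lra. lra.
  - exists Ct, 1%nat. intros n Hn.
    assert (HnR : 1 <= INR n) by (apply (le_INR 1); auto).
    assert (Hsn : 0 < sqrt (INR n)) by (apply sqrt_lt_R0; lra).
    assert (Hp : 0 < 2 ^ n) by (apply pow_lt; lra).
    assert (HD : 0 < / sqrt (INR n) * 2 ^ n) by (apply Rmult_lt_0_compat; [apply Rinv_0_lt_compat|]; lra).
    apply Rmult_le_reg_r with (/ sqrt (INR n) * 2 ^ n); auto.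
    replace (Rabs (INR (bsum l n) - b_asym l n) / (/ sqrt (INR n) * 2 ^ n) * (/ sqrt (INR n) * 2 ^ n))
      with (Rabs (INR (bsum l n) - b_asym l n)) by (field; lra).
    replace (Ct * / INR n * (/ sqrt (INR n) * 2 ^ n)) with (Ct * (/ sqrt (INR n) * 2 ^ n) / INR n) by (field; lra).
    apply HB; auto.
Qed.
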